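(* Let $m\ge1$ and let $Y^1,\dots,Y^m$ be independent copies of the photon-count process $Y=(Y_t)_{t=1}^T$ of an HTMM, and $Y^{(m)}_t=\sum_{k=1}^mY^k_t$. Assume $0<q_{00}<1$, $\theta_1>0$, that $p_{00},p_{10}$ have finite moment generating functions near $0$, and that $M=V\Lambda V^{-1}$ with $\Lambda=\mathrm{diag}(\lambda_0,\dots,\lambda_r)$, $\lambda_r=1$, column $r$ of $V$ equal to $e_r$. Define $\alpha_x,\alpha^0_x$ as below, and $$\mu_t=m\theta_1\sum_{x\in\mathcal S}\alpha_x\lambda_x^{t-1},\qquad \mu^0_t=m\theta_1\sum_{x\in\mathcal S}\alpha^0_x\lambda_x^{t-1}\quad(t\ge1).$$ Then $\mathbb E[Y^{(m)}_t]=\mu_t$ (and if $\nu_0<1$, $\mu_t=m\theta_1\sum_{x=0}^{r-1}(\nu_0\alpha^0_x+(1-\nu_0)\alpha^1_x)\lambda_x^{t-1}$), and the covariance $\Sigma_{tt'}=\mathrm{Cov}(Y^{(m)}_t,Y^{(m)}_{t'})$ is $$\Sigma_{tt}=\frac1m\big(m\theta_1(\theta_3+1)+m-\mu_t\big)\mu_t,$$ $$\Sigma_{tt'}=\frac1m\left[\Big(\theta_2-q_{00}\frac{1-\theta_2}{1-q_{00}}\Big)\mu^0_{t-t'}+\frac{1-\theta_2}{1-q_{00}}\mu^0_{t-t'+1}-\mu_t\right]\mu_{t'}\quad (1\le t'<t\le T).$$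
   Context: HTMM: fix $r\ge1$, $T\ge1$, $\mathcal S=\{0,\dots,r\}$; $q_{xz}\in[0,1]$ ($x\in\mathcal S$, $0\le z\le r-1$) with $\sum_xq_{xz}=1$; column-stochastic $M^\ell$ with column $0$ equal to $e_0$, column $r$ equal to $e_r$, $M^\ell_{xz}=q_{xz}$ for $1\le z\le r-1$; $M^s$ with column $0$ equal to $(q_{00},\dots,q_{r0})^{\mathrm T}$ and $M^s_{xz}=\delta_{xz}$ for $z\ge1$; $M=M^sM^\ell$. $p_{00},p_{10}$ are distributions on $\mathbb N_0$, $p_{x0}:=p_{10}$ for $x\ge1$, $p_{xx'}:=\delta_0$ for $x'\neq0$; $\nu$ a probability vector on $\mathcal S$. Joint law: $\mathbb P(X_0=x_0,X'_t=x'_t,X_t=x_t,Y_t=y_t,1\le t\le T)=\nu_{x_0}\prod_{t}M^\ell_{x'_tx_{t-1}}M^s_{x_tx'_t}p_{x_tx'_t}(y_t)$. Parameters: $\theta_1=\mathbb E[Y_t\mid X'_t=0]$, $\theta_2=q_{00}\mathbb E[Y_t\mid X'_t=X_t=0]/\theta_1$, $\theta_3=\mathrm{Var}[Y_t\mid X'_t=0]/\theta_1^2-1/\theta_1$. Coefficients: $\alpha_x=V_{0x}\frac{\lambda_x}{q_{00}}\sum_z(V^{-1})_{xz}\nu_z$, $\alpha^0_x=\frac{\lambda_x}{q_{00}}V_{0x}(V^{-1})_{x0}$, and for $\nu_0<1$, $\alpha^1_x=\frac{\lambda_x}{q_{00}}V_{0x}\sum_z(V^{-1})_{xz}\nu'_z$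 with $\nu'=\frac{1}{1-\nu_0}(0,\nu_1,\dots,\nu_r)$. Convention $0^0=1$. *)

(* Defs.v *)
From Stdlib Require Import Reals List Lia.
Open Scope R_scope.

Fixpoint rsum (n : nat) (f : nat -> R) : R :=
  match n with O => 0 | S k => rsum k f + f k end.
Fixpoint rprod (n : nat) (f : nat -> R) : R :=
  match n with O => 1 | S k => rprod k f * f k end.

Definition fsum {A : Type} (f : A -> R) (l : list A) : R :=
  fold_right (fun a s => f a + s) 0 l.

Definition has_sum {A : Type} (f : A -> R) (L : R) : Prop :=
  (exists B, forall l, NoDup l -> fsum (fun a => Rabs (f a)) l <= B) /\
  (forall eps, 0 < eps -> exists l0, NoDup l0 /\
     forall l, NoDup l -> incl l0 l -> Rabs (fsum f l - L) < eps).

(* ---------- minimal complex numbers (eigenvalues may be complex) ---------- *)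
Record Cx := mkC { Cre : R; Cim : R }.
Definition RtoC (a : R) : Cx := mkC a 0.
Definition Cadd (z w : Cx) : Cx := mkC (Cre z + Cre w) (Cim z + Cim w).
Definition Copp (z : Cx) : Cx := mkC (- Cre z) (- Cim z).
Definition Csub (z w : Cx) : Cx := Cadd z (Copp w).
Definition Cmul (z w : Cx) : Cx :=
  mkC (Cre z * Cre w - Cim z * Cim w) (Cre z * Cim w + Cim z * Cre w).
Fixpoint Cpow (z : Cx) (n : nat) : Cx :=
  match n with O => RtoC 1 | S k => Cmul (Cpow z k) z end.
Fixpoint csum (n : nat) (f : nat -> Cx) : Cx :=
  match n with O => RtoC 0 | S k => Cadd (csum k f) (f k) end.

Definition delta (i j : nat) : R := if Nat.eqb i j then 1 else 0.

(* q x z, x in {0..r}, z in {0..r-1} *)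
Definition Ml (q : nat -> nat -> R) (r : nat) (x z : nat) : R :=
  if Nat.eqb z 0%nat then delta x 0%nat
  else if Nat.eqb z r then delta x r
  else q x z.
Definition Ms (q : nat -> nat -> R) (x z : nat) : R :=
  if Nat.eqb z 0%nat then q x 0%nat else delta x z.
Definition Mfull (q : nat -> nat -> R) (r : nat) (x z : nat) : R :=
  rsum (S r) (fun y => Ms q x y * Ml q r y z).

Definition pem (p00 p10 : nat -> R) (x x' n : nat) : R :=
  if Nat.eqb x' 0%nat then (if Nat.eqb x 0%nat then p00 n else p10 n)
  else (if Nat.eqb n 0%nat then 1 else 0).

(* One copy: sx t = X_t (t = 0..T), sxp t = X'_t, sy t = Y_t (t = 1..T). *)
Record Sample := mkSample { sx : nat -> nat; sxp : nat -> nat; sy : nat -> nat }.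
Definition zeroS : Sample := mkSample (fun _ => 0%nat) (fun _ => 0%nat) (fun _ => 0%nat).

(* canonical representative: irrelevant coordinates are 0 *)
Definition canon1 (r T : nat) (s : Sample) : Prop :=
  (sx s 0%nat <= r)%nat /\ sxp s 0%nat = 0%nat /\ sy s 0%nat = 0%nat /\
  (forall t, (1 <= t <= T)%nat -> (sx s t <= r)%nat /\ (sxp s t <= r)%nat) /\
  (forall t, (T < t)%nat -> sx s t = 0%nat /\ sxp s t = 0%nat /\ sy s t = 0%nat).

Definition canon (r T m : nat) (w : nat -> Sample) : Prop :=
  (forall k, (k < m)%nat -> canon1 r T (w k)) /\ (forall k, (m <= k)%nat -> w k = zeroS).

Definition Omega (r T m : nat) : Type := { w : nat -> Sample | canon r T m w }.

Definition P1 (q : nat -> nat -> R) (nu : nat -> R) (p00 p10 : nat -> R)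
  (r T : nat) (s : Sample) : R :=
  nu (sx s 0%nat) * rprod T (fun i => let t := S i in
     Ml q r (sxp s t) (sx s (t - 1)%nat) * Ms q (sx s t) (sxp s t)
     * pem p00 p10 (sx s t) (sxp s t) (sy s t)).

Definition Pm (q : nat -> nat -> R) (nu : nat -> R) (p00 p10 : nat -> R)
  (r T m : nat) (w : Omega r T m) : R :=
  rprod m (fun k => P1 q nu p00 p10 r T (proj1_sig w k)).

Definition Ym {r T m : nat} (t : nat) (w : Omega r T m) : R :=
  rsum m (fun k => INR (sy (proj1_sig w k) t)).

(* e00, e10: first moments of p00, p10; f00, f10: second moments *)
Definition theta1 (q00 e00 e10 : R) : R := q00 * e00 + (1 - q00) * e10.
Definition theta2 (q00 e00 e10 : R) : R := q00 * e00 / theta1 q00 e00 e10.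
Definition theta3 (q00 e00 e10 f00 f10 : R) : R :=
  let th1 := theta1 q00 e00 e10 in
  (q00 * f00 + (1 - q00) * f10 - th1 ^ 2) / th1 ^ 2 - / th1.

Definition alpha (r : nat) (q00 : R) (nu : nat -> R) (V W : nat -> nat -> Cx)
  (lam : nat -> Cx) (x : nat) : Cx :=
  Cmul (Cmul (V 0%nat x) (Cmul (lam x) (RtoC (/ q00))))
       (csum (S r) (fun z => Cmul (W x z) (RtoC (nu z)))).
Definition alpha0 (q00 : R) (V W : nat -> nat -> Cx) (lam : nat -> Cx) (x : nat) : Cx :=
  Cmul (Cmul (lam x) (RtoC (/ q00))) (Cmul (V 0%nat x) (W x 0%nat)).
Definition nu' (nu : nat -> R) (z : nat) : R :=
  if Nat.eqb z 0%nat then 0 else nu z / (1 - nu 0%nat).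
Definition alpha1 (r : nat) (q00 : R) (nu : nat -> R) (V W : nat -> nat -> Cx)
  (lam : nat -> Cx) (x : nat) : Cx :=
  Cmul (Cmul (lam x) (RtoC (/ q00)))
       (Cmul (V 0%nat x) (csum (S r) (fun z => Cmul (W x z) (RtoC (nu' nu z))))).

Definition mu (r m : nat) (th1 q00 : R) (nu : nat -> R) (V W : nat -> nat -> Cx)
  (lam : nat -> Cx) (t : nat) : Cx :=
  Cmul (RtoC (INR m * th1))
       (csum (S r) (fun x => Cmul (alpha r q00 nu V W lam x) (Cpow (lam x) (t - 1)%nat))).
Definition mu0 (r m : nat) (th1 q00 : R) (V W : nat -> nat -> Cx)
  (lam : nat -> Cx) (t : nat) : Cx :=
  Cmul (RtoC (INR m * th1))
       (csum (S r) (fun x => Cmul (alpha0 q00 V W lam x) (Cpow (lam x) (t - 1)%nat))).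

(* Main.v *)
Require Import Defs.
From Stdlib Require Import Reals List Lia.
From Stdlib Require Import Lra Permutation.
From Stdlib Require Import Classical ClassicalEpsilon FunctionalExtensionality ProofIrrelevance.
Open Scope R_scope.

Lemma fsum_nil {A} (f : A -> R) : fsum f nil = 0.
Proof. reflexivity. Qed.
Lemma fsum_cons {A} (f : A -> R) a l : fsum f (a :: l) = f a + fsum f l.
Proof. reflexivity. Qed.
Lemma fsum_app {A} (f : A -> R) l1 l2 : fsum f (l1 ++ l2) = fsum f l1 + fsum f l2.
Proof. induction l1; simpl; [ring| rewrite IHl1; ring]. Qed.
Lemma fsum_perm {A} (f : A -> R) l1 l2 : Permutation l1 l2 -> fsum f l1 = fsum f l2.
Proof. induction 1; simpl; try lra. Qed.
Lemma fsum_ext_in {A} (f g : A -> R) l : (forall a, In a l -> f a = g a) -> fsum f l = fsum g l.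
Proof. induction l; simpl; intros H; [reflexivity|]. rewrite H, IHl; auto. Qed.
Lemma fsum_plus {A} (f g : A -> R) l : fsum (fun a => f a + g a) l = fsum f l + fsum g l.
Proof. induction l; simpl; [ring| rewrite IHl; ring]. Qed.
Lemma fsum_scal {A} (f : A -> R) c l : fsum (fun a => c * f a) l = c * fsum f l.
Proof. induction l; simpl; [ring| rewrite IHl; ring]. Qed.
Lemma fsum_map {A B} (f : B -> R) (h : A -> B) l : fsum f (map h l) = fsum (fun a => f (h a)) l.
Proof. induction l; simpl; [ring| rewrite IHl; ring]. Qed.
Lemma fsum_nonneg {A} (f : A -> R) l : (forall a, 0 <= f a) -> 0 <= fsum f l.
Proof. intros H; induction l; simpl; [lra| specialize (H a); lra]. Qed.
Lemma fsum_abs {A} (f : A -> R) l : Rabs (fsum f l) <= fsum (fun a => Rabs (f a)) l.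
Proof. induction l; simpl. rewrite Rabs_R0; lra.
  eapply Rle_trans; [apply Rabs_triang|lra]. Qed.
Lemma fsum_le {A} (f g : A -> R) l : (forall a, f a <= g a) -> fsum f l <= fsum g l.
Proof. intros H; induction l; simpl; [lra| specialize (H a); lra]. Qed.

Lemma fsum_incl_le {A} (g : A -> R) l l' : (forall a, 0 <= g a) -> NoDup l -> incl l l' ->
  fsum g l <= fsum g l'.
Proof.
  intros Hg Hl; revert l'; induction Hl as [|a l Hna Hl IH]; intros l' Hi.
  - simpl. apply fsum_nonneg; auto.
  - assert (Ha : In a l') by (apply Hi; left; auto).
    destruct (in_split a l' Ha) as [l1 [l2 E]]. subst l'.
    rewrite (fsum_perm g (l1 ++ a :: l2) (a :: l1 ++ l2)) by (symmetry; apply Permutation_middle).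
    simpl. assert (fsum g l <= fsum g (l1 ++ l2)); [|lra].
    apply IH. intros b Hb. assert (Hb' : In b (l1 ++ a :: l2)) by (apply Hi; right; auto).
    apply in_app_or in Hb'. apply in_or_app. destruct Hb' as [H|[H|H]]; auto.
    subst; contradiction.
Qed.

Lemma nodup_union {A} (l1 l2 : list A) : NoDup l1 -> exists l, NoDup l /\ incl l1 l /\ incl l2 l.
Proof.
  intros H1; induction l2 as [|a l2 IH].
  - exists l1; split; [auto| split; [apply incl_refl| intros x []]].
  - destruct IH as [l [Hn [Hi1 Hi2]]].
    destruct (classic (In a l)) as [Ha|Ha].
    + exists l; repeat split; auto. intros x [<-|Hx]; auto.
    + exists (a :: l); repeat split.
      * constructor; auto.
      * intros x Hx; right; auto.
      * intros x [<-|Hx]; [left; auto| right; auto].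
Qed.

Lemma has_sum_approx {A} (f : A -> R) L eps : has_sum f L -> 0 < eps ->
  exists l, NoDup l /\ Rabs (fsum f l - L) < eps.
Proof. intros [_ H] He. destruct (H eps He) as [l0 [Hn Hc]]. exists l0; split; auto.
  apply Hc; auto. apply incl_refl. Qed.

Lemma has_sum_le {A} (f : A -> R) L l : has_sum f L -> (forall a, 0 <= f a) -> NoDup l -> fsum f l <= L.
Proof.
  intros Hs Hf Hl. destruct (Rle_or_lt (fsum f l) L) as [|Hlt]; auto.
  destruct Hs as [_ H]. destruct (H (fsum f l - L)) as [l0 [Hn0 Hc]]; [lra|].
  destruct (nodup_union l0 l Hn0) as [l' [Hn' [Hi1 Hi2]]].
  specialize (Hc l' Hn' Hi1). pose proof (fsum_incl_le f l l' Hf Hl Hi2).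
  apply Rabs_def2 in Hc. lra.
Qed.

Lemma has_sum_ge0 {A} (f : A -> R) L : has_sum f L -> (forall a, 0 <= f a) -> 0 <= L.
Proof. intros H Hf. apply (has_sum_le f L nil H Hf). constructor. Qed.

Lemma has_sum_nonneg_intro {A} (f : A -> R) L : (forall a, 0 <= f a) ->
  (forall l, NoDup l -> fsum f l <= L) ->
  (forall eps, 0 < eps -> exists l, NoDup l /\ L - eps < fsum f l) -> has_sum f L.
Proof.
  intros Hf Hu Hl. split.
  - exists L. intros l Hn. rewrite (fsum_ext_in _ f); [apply Hu; auto|].
    intros a _; apply Rabs_right; specialize (Hf a); lra.
  - intros eps He. destruct (Hl eps He) as [l0 [Hn0 H0]]. exists l0; split; auto.
    intros l Hn Hi. pose proof (fsum_incl_le f l0 l Hf Hn0 Hi). pose proof (Hu l Hn).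
    apply Rabs_def1; lra.
Qed.

Lemma has_sum_unique {A} (f : A -> R) L1 L2 : has_sum f L1 -> has_sum f L2 -> L1 = L2.
Proof.
  intros [_ H1] [_ H2]. destruct (Req_dec L1 L2) as [|Hne]; auto.
  set (e := Rabs (L1 - L2) / 2). assert (He : 0 < e).
  { unfold e. assert (L1 - L2 <> 0) by lra. pose proof (Rabs_pos_lt _ H); lra. }
  destruct (H1 e He) as [l1 [Hn1 C1]]. destruct (H2 e He) as [l2 [Hn2 C2]].
  destruct (nodup_union l1 l2 Hn1) as [l [Hn [Hi1 Hi2]]].
  specialize (C1 l Hn Hi1). specialize (C2 l Hn Hi2).
  assert (Rabs (L1 - L2) <= Rabs (fsum f l - L2) + Rabs (fsum f l - L1)).
  { replace (L1 - L2) with ((fsum f l - L2) - (fsum f l - L1)) by ring.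
    eapply Rle_trans; [apply Rabs_triang|]. rewrite Rabs_Ropp. lra. }
  unfold e in *. lra.
Qed.

Lemma has_sum_ext {A} (f g : A -> R) L : (forall a, f a = g a) -> has_sum f L -> has_sum g L.
Proof.
  intros E [[B HB] H]. assert (F : f = g) by (apply functional_extensionality; auto).
  subst; split; [exists B|]; auto.
Qed.

Lemma has_sum_eq {A} (f : A -> R) L L' : L = L' -> has_sum f L -> has_sum f L'.
Proof. intros; subst; auto. Qed.

Lemma has_sum_plus {A} (f g : A -> R) a b : has_sum f a -> has_sum g b ->
  has_sum (fun x => f x + g x) (a + b).
Proof.
  intros [[B1 HB1] H1] [[B2 HB2] H2]. split.
  - exists (B1 + B2). intros l Hl.
    eapply Rle_trans; [| apply Rplus_le_compat; [apply (HB1 l Hl)|apply (HB2 l Hl)]].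
    rewrite <- fsum_plus. apply fsum_le. intros; apply Rabs_triang.
  - intros eps He. destruct (H1 (eps/2)) as [l1 [Hn1 C1]]; [lra|].
    destruct (H2 (eps/2)) as [l2 [Hn2 C2]]; [lra|].
    destruct (nodup_union l1 l2 Hn1) as [l0 [Hn [Hi1 Hi2]]].
    exists l0; split; auto. intros l Hl Hi.
    specialize (C1 l Hl (incl_tran Hi1 Hi)). specialize (C2 l Hl (incl_tran Hi2 Hi)).
    rewrite fsum_plus. replace (fsum f l + fsum g l - (a + b)) with
      ((fsum f l - a) + (fsum g l - b)) by ring.
    eapply Rle_lt_trans; [apply Rabs_triang| lra].
Qed.

Lemma has_sum_scal {A} (f : A -> R) c L : has_sum f L -> has_sum (fun x => c * f x) (c * L).
Proof.
  intros [[B HB] H]. split.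
  - exists (Rabs c * B). intros l Hl.
    rewrite (fsum_ext_in _ (fun a => Rabs c * Rabs (f a))) by (intros; apply Rabs_mult).
    rewrite fsum_scal. apply Rmult_le_compat_l; [apply Rabs_pos| auto].
  - intros eps He. destruct (H (eps / (Rabs c + 1))) as [l0 [Hn C]].
    { apply Rdiv_lt_0_compat; [lra|]. pose proof (Rabs_pos c); lra. }
    exists l0; split; auto. intros l Hl Hi. specialize (C l Hl Hi).
    rewrite fsum_scal. replace (c * fsum f l - c * L) with (c * (fsum f l - L)) by ring.
    rewrite Rabs_mult. pose proof (Rabs_pos c).
    apply Rle_lt_trans with (Rabs c * (eps / (Rabs c + 1))).
    + apply Rmult_le_compat_l; lra.
    + apply Rlt_le_trans with ((Rabs c + 1) * (eps / (Rabs c + 1))).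
      * apply Rmult_lt_compat_r; [apply Rdiv_lt_0_compat; lra| lra].
      * right; field; lra.
Qed.

Lemma has_sum_scal_r {A} (f : A -> R) c L : has_sum f L -> has_sum (fun x => f x * c) (L * c).
Proof. intros H. apply (has_sum_ext (fun x => c * f x)); [intros; ring|].
  rewrite Rmult_comm. apply has_sum_scal; auto. Qed.

Lemma has_sum_minus {A} (f g : A -> R) a b : has_sum f a -> has_sum g b ->
  has_sum (fun x => f x - g x) (a - b).
Proof. intros Hf Hg. apply (has_sum_ext (fun x => f x + (-1) * g x)); [intros; ring|].
  replace (a - b) with (a + (-1) * b) by ring. apply has_sum_plus; auto. apply has_sum_scal; auto. Qed.

Lemma has_sum_iso {A B} (f : A -> B) (g : B -> A) (h : B -> R) L :
  (forall a, g (f a) = a) -> (forall b, f (g b) = b) ->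
  has_sum (fun a => h (f a)) L -> has_sum h L.
Proof.
  intros gf fg [[Bd HB] H].
  assert (Nd : forall l, NoDup l -> NoDup (map g l)).
  { intros l Hl. apply FinFun.Injective_map_NoDup; auto. intros x y E.
    rewrite <- (fg x), <- (fg y), E; auto. }
  assert (Eq : forall (k : B -> R) l, fsum k l = fsum (fun a => k (f a)) (map g l)).
  { intros k l. rewrite fsum_map. apply fsum_ext_in. intros; rewrite fg; auto. }
  split.
  - exists Bd. intros l Hl. rewrite Eq. apply HB; auto.
  - intros eps He. destruct (H eps He) as [l0 [Hn C]]. exists (map f l0). split.
    + apply FinFun.Injective_map_NoDup; auto. intros x y E.
      rewrite <- (gf x), <- (gf y), E; auto.
    + intros l Hl Hi. rewrite Eq. apply C; auto. intros a Ha.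
      assert (In (f a) l) by (apply Hi; apply in_map; auto).
      rewrite <- (gf a). apply in_map; auto.
Qed.

Definition decP (P : Prop) : bool := if excluded_middle_informative P then true else false.
Lemma decP_true (P : Prop) : decP P = true <-> P.
Proof. unfold decP; destruct (excluded_middle_informative P); split; intros; auto; discriminate. Qed.

Lemma fsum_filter_split {A} (f : A -> R) (p : A -> bool) l :
  fsum f l = fsum f (filter p l) + fsum f (filter (fun a => negb (p a)) l).
Proof. induction l; simpl; [ring|]. destruct (p a); simpl; rewrite IHl; ring. Qed.

Lemma fsum_filter_zero {A} (f : A -> R) (p : A -> bool) l :
  (forall a, p a = false -> f a = 0) -> fsum f l = fsum f (filter p l).
Proof. intros H; induction l; simpl; [ring|]. destruct (p a) eqn:E; simpl; rewrite IHl; auto.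
  rewrite H; auto; ring. Qed.

Lemma tonelli_a {A B} (f : A * B -> R) (g : A -> R) :
  (forall p, 0 <= f p) -> (forall a, has_sum (fun b => f (a, b)) (g a)) ->
  forall n (l : list (A * B)), (length l <= n)%nat -> NoDup l ->
  exists la, NoDup la /\ incl la (map fst l) /\ fsum f l <= fsum g la.
Proof.
  intros Hf Hg n. induction n as [|n IH]; intros l Hlen Hl.
  - destruct l; [|simpl in Hlen; lia]. exists nil; simpl; split; [constructor|split; [intros x []|lra]].
  - destruct l as [|[a b] l'].
    + exists nil; simpl; split; [constructor|split; [intros x []|lra]].
    + set (l := (a, b) :: l') in *.
      set (p := fun q : A * B => decP (fst q = a)).
      rewrite (fsum_filter_split f p l).
      assert (Hl2 : NoDup (filter (fun q => negb (p q)) l)) by (apply NoDup_filter; auto).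
      assert (Hlen2 : (length (filter (fun q => negb (p q)) l) <= n)%nat).
      { unfold l; simpl. unfold p at 1. assert (decP (fst (a,b) = a) = true) by (apply decP_true; auto).
        rewrite H; simpl. pose proof (filter_length_le (fun q => negb (p q)) l'). simpl in Hlen; lia. }
      destruct (IH _ Hlen2 Hl2) as [la2 [Hn2 [Hi2 Hs2]]].
      exists (a :: la2). split; [|split].
      * constructor; auto. intros Ha. apply Hi2 in Ha. apply in_map_iff in Ha.
        destruct Ha as [q [Eq Hq]]. apply filter_In in Hq. destruct Hq as [_ Hq].
        unfold p in Hq. assert (decP (fst q = a) = true) by (apply decP_true; auto).
        rewrite H in Hq; discriminate.
      * intros x [<-|Hx]. left; auto. apply Hi2 in Hx. apply in_map_iff in Hx.
        destruct Hx as [q [Eq Hq]]. apply filter_In in Hq. subst; apply in_map; tauto.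
      * rewrite fsum_cons. assert (fsum f (filter p l) <= g a); [|lra].
        assert (E : fsum f (filter p l) = fsum (fun b => f (a, b)) (map snd (filter p l))).
        { rewrite fsum_map. apply fsum_ext_in. intros [x y] Hq. apply filter_In in Hq.
          destruct Hq as [_ Hq]. unfold p in Hq. apply (proj1 (decP_true _)) in Hq. simpl in Hq; simpl; rewrite Hq; reflexivity. }
        rewrite E. apply has_sum_le; auto.
        assert (Hnd : NoDup (filter p l)) by (apply NoDup_filter; auto).
        assert (Hall : forall q, In q (filter p l) -> fst q = a).
        { intros q Hq. apply filter_In in Hq. destruct Hq as [_ Hq]. unfold p in Hq. apply (proj1 (decP_true _)) in Hq; auto. }
        clear - Hnd Hall. induction Hnd as [|q l0 Hq Hnd IHn]; simpl; constructor.
        -- intros Hin. apply in_map_iff in Hin. destruct Hin as [q' [E H']].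
           apply Hq. destruct q as [x y], q' as [x' y']. simpl in E; subst.
           assert (x = a) by (apply (Hall (x, y)); left; auto).
           assert (x' = a) by (apply (Hall (x', y)); right; auto). subst; auto.
        -- apply IHn; intros; apply Hall; right; auto.
Qed.

Lemma tonelli_b {A B} (f : A * B -> R) (g : A -> R) :
  (forall p, 0 <= f p) -> (forall a, has_sum (fun b => f (a, b)) (g a)) ->
  forall d, 0 < d -> forall la, NoDup la ->
  exists l, NoDup l /\ incl (map fst l) la /\ fsum g la - INR (length la) * d <= fsum f l.
Proof.
  intros Hf Hg d Hd la Hla. induction Hla as [|a la Ha Hla IH].
  - exists nil; simpl; split; [constructor| split; [intros x []|lra]].
  - destruct IH as [l [Hn [Hi Hs]]].
    destruct (has_sum_approx _ _ d (Hg a) Hd) as [lb [Hnb Hb]].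
    exists (map (pair a) lb ++ l). split; [|split].
    + apply NoDup_app; auto.
      * apply FinFun.Injective_map_NoDup; auto. intros x y E; inversion E; auto.
      * intros q Hq Hq'. apply in_map_iff in Hq. destruct Hq as [y [<- _]].
        apply Ha. apply Hi. change a with (fst (a, y)). apply in_map; auto.
    + rewrite map_app. intros x Hx. apply in_app_or in Hx. destruct Hx as [Hx|Hx].
      * rewrite map_map in Hx. apply in_map_iff in Hx. destruct Hx as [y [<- _]]. left; auto.
      * right; auto.
    + rewrite fsum_app, fsum_map. simpl length. rewrite S_INR. simpl.
      apply Rabs_def2 in Hb. lra.
Qed.

Lemma tonelli {A B} (f : A * B -> R) (g : A -> R) L :
  (forall p, 0 <= f p) -> (forall a, has_sum (fun b => f (a, b)) (g a)) -> has_sum g L ->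
  has_sum f L.
Proof.
  intros Hf Hg HL.
  assert (Hg0 : forall a, 0 <= g a) by (intros a; apply (has_sum_ge0 _ _ (Hg a)); intros; apply Hf).
  apply has_sum_nonneg_intro; auto.
  - intros l Hl. destruct (tonelli_a f g Hf Hg (length l) l (le_n _) Hl) as [la [Hn [_ Hs]]].
    pose proof (has_sum_le g L la HL Hg0 Hn). lra.
  - intros eps He. destruct (has_sum_approx g L (eps/2) HL) as [la [Hn Hs]]; [lra|].
    set (d := eps / 2 / (INR (length la) + 1)).
    assert (Hd : 0 < d) by (unfold d; apply Rdiv_lt_0_compat; [lra| pose proof (pos_INR (length la)); lra]).
    destruct (tonelli_b f g Hf Hg d Hd la Hn) as [l [Hl [_ Hl2]]].
    exists l; split; auto. apply Rabs_def2 in Hs.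
    assert (INR (length la) * d < eps / 2).
    { unfold d. pose proof (pos_INR (length la)).
      apply Rle_lt_trans with ((INR (length la) + 1) * (eps / 2 / (INR (length la) + 1)) - eps/2/(INR (length la) + 1)).
      - right; ring.
      - assert (0 < eps / 2 / (INR (length la) + 1)) by (apply Rdiv_lt_0_compat; lra).
        replace ((INR (length la) + 1) * (eps / 2 / (INR (length la) + 1))) with (eps/2) by (field; lra). lra. }
    lra.
Qed.

Lemma has_sum_prod {A B} (f : A -> R) (g : B -> R) a b :
  (forall x, 0 <= f x) -> (forall y, 0 <= g y) -> has_sum f a -> has_sum g b ->
  has_sum (fun p : A * B => f (fst p) * g (snd p)) (a * b).
Proof.
  intros Hf Hg Ha Hb. apply (tonelli _ (fun x => f x * b)).
  - intros [x y]; simpl; apply Rmult_le_pos; auto.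
  - intros x; simpl. apply has_sum_scal; auto.
  - apply has_sum_scal_r; auto.
Qed.

Lemma has_sum_support {A} (f : A -> R) l0 : NoDup l0 -> (forall a, f a <> 0 -> In a l0) ->
  has_sum f (fsum f l0).
Proof.
  intros Hn Hs. set (p := fun a => decP (In a l0)).
  assert (Z : forall (k : A -> R), (forall a, f a = 0 -> k a = 0) -> forall l, fsum k l = fsum k (filter p l)).
  { intros k Hk l. apply fsum_filter_zero. intros a Ha. apply Hk.
    destruct (Req_dec (f a) 0) as [|Hne]; auto. apply Hs in Hne.
    unfold p in Ha. assert (decP (In a l0) = true) by (apply decP_true; auto). congruence. }
  split.
  - exists (fsum (fun a => Rabs (f a)) l0). intros l Hl.
    rewrite (Z (fun a => Rabs (f a))) by (intros a E; rewrite E; apply Rabs_R0).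
    apply fsum_incl_le; [intros; apply Rabs_pos| apply NoDup_filter; auto|].
    intros x Hx. apply filter_In in Hx. apply decP_true; tauto.
  - intros eps He. exists l0; split; auto. intros l Hl Hi.
    rewrite (Z f) by auto.
    rewrite (fsum_perm f (filter p l) l0).
    + unfold Rminus; rewrite Rplus_opp_r, Rabs_R0; auto.
    + apply NoDup_Permutation; [apply NoDup_filter; auto| auto|].
      intros x; split; intros Hx.
      * apply filter_In in Hx. apply decP_true; tauto.
      * apply filter_In. split; auto. apply decP_true; auto.
Qed.

Lemma rsum_ext n f g : (forall i, (i < n)%nat -> f i = g i) -> rsum n f = rsum n g.
Proof. induction n; simpl; intros H; auto. rewrite IHn, H; auto. Qed.
Lemma rsum_plus n f g : rsum n (fun i => f i + g i) = rsum n f + rsum n g.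
Proof. induction n; simpl; [ring| rewrite IHn; ring]. Qed.
Lemma rsum_scal n c f : rsum n (fun i => c * f i) = c * rsum n f.
Proof. induction n; simpl; [ring| rewrite IHn; ring]. Qed.
Lemma rsum_scal_r n c f : rsum n (fun i => f i * c) = rsum n f * c.
Proof. induction n; simpl; [ring| rewrite IHn; ring]. Qed.
Lemma rsum_zero n f : (forall i, (i < n)%nat -> f i = 0) -> rsum n f = 0.
Proof. induction n; simpl; intros H; auto. rewrite IHn, H; auto; ring. Qed.
Lemma rsum_swap n m f : rsum n (fun i => rsum m (fun j => f i j)) = rsum m (fun j => rsum n (fun i => f i j)).
Proof. induction n; simpl. rewrite rsum_zero; auto. rewrite IHn, <- rsum_plus; auto. Qed.
Lemma rsum_first n f : rsum (S n) f = f O + rsum n (fun i => f (S i)).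
Proof. induction n; simpl in *. ring. rewrite IHn; ring. Qed.
Lemma rsum_single n j f : (j < n)%nat -> (forall i, (i < n)%nat -> i <> j -> f i = 0) -> rsum n f = f j.
Proof.
  induction n; intros Hj H; [lia|]. simpl. destruct (Nat.eq_dec j n) as [->|Hne].
  - rewrite rsum_zero; [ring|]. intros; apply H; lia.
  - rewrite IHn; [|lia|intros; apply H; lia]. rewrite (H n); [ring|lia|lia].
Qed.
Lemma rsum_nonneg n f : (forall i, (i < n)%nat -> 0 <= f i) -> 0 <= rsum n f.
Proof. induction n; simpl; intros H; [lra|]. assert (0 <= rsum n f) by (apply IHn; intros; apply H; lia). assert (0 <= f n) by (apply H; lia). lra. Qed.
Lemma rsum_delta n j f : (j < n)%nat -> rsum n (fun i => delta i j * f i) = f j.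
Proof. intros Hj. rewrite (rsum_single n j); auto. unfold delta; rewrite Nat.eqb_refl; ring.
  intros i _ Hi. unfold delta. apply Nat.eqb_neq in Hi; rewrite Hi; ring. Qed.
Lemma rsum_delta' n j f : (j < n)%nat -> rsum n (fun i => delta j i * f i) = f j.
Proof. intros Hj. rewrite (rsum_single n j); auto. unfold delta; rewrite Nat.eqb_refl; ring.
  intros i _ Hi. unfold delta. assert (j <> i) by auto. apply Nat.eqb_neq in H; rewrite H; ring. Qed.
Lemma fsum_seq f k : fsum f (seq 0 k) = rsum k f.
Proof. induction k; auto. rewrite seq_S, fsum_app, IHk. simpl. ring. Qed.

Definition BN (n : nat) : Type := { x : nat | (x <= n)%nat }.
Definition mkBN (n x : nat) : BN n :=
  match Compare_dec.le_dec x n with left p => exist _ x p | right _ => exist _ O (Nat.le_0_l n) end.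
Lemma mkBN_val n x : (x <= n)%nat -> proj1_sig (mkBN n x) = x.
Proof. unfold mkBN; destruct (Compare_dec.le_dec x n); simpl; auto; lia. Qed.
Lemma BN_eq n (a b : BN n) : proj1_sig a = proj1_sig b -> a = b.
Proof. destruct a, b; simpl; intros; subst. f_equal; apply proof_irrelevance. Qed.
Definition enumBN n : list (BN n) := map (mkBN n) (seq 0 (S n)).
Lemma has_sum_BN n (h : nat -> R) : has_sum (fun b : BN n => h (proj1_sig b)) (rsum (S n) h).
Proof.
  replace (rsum (S n) h) with (fsum (fun b : BN n => h (proj1_sig b)) (enumBN n)).
  - apply has_sum_support.
    + unfold enumBN. apply FinFun.Injective_map_NoDup_in; [|apply seq_NoDup].
      intros x y Hx Hy E. apply in_seq in Hx, Hy.
      rewrite <- (mkBN_val n x), <- (mkBN_val n y), E; auto; lia.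
    + intros b _. unfold enumBN. destruct b as [x Hx]. apply in_map_iff. exists x.
      split; [apply BN_eq; rewrite mkBN_val; auto| apply in_seq; lia].
  - unfold enumBN. rewrite fsum_map, <- fsum_seq. apply fsum_ext_in.
    intros x Hx. apply in_seq in Hx. rewrite mkBN_val; auto; lia.
Qed.

Lemma Cx_ext z w : Cre z = Cre w -> Cim z = Cim w -> z = w.
Proof. destruct z, w; simpl; intros; subst; auto. Qed.
Lemma Cx_rt : ring_theory (RtoC 0) (RtoC 1) Cadd Cmul Csub Copp (@eq Cx).
Proof.
  constructor; intros; apply Cx_ext; simpl; ring.
Qed.
Add Ring CxRing : Cx_rt.

Lemma RtoC_plus a b : RtoC (a + b) = Cadd (RtoC a) (RtoC b).
Proof. apply Cx_ext; simpl; ring. Qed.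
Lemma RtoC_mult a b : RtoC (a * b) = Cmul (RtoC a) (RtoC b).
Proof. apply Cx_ext; simpl; ring. Qed.
Lemma RtoC_minus a b : RtoC (a - b) = Csub (RtoC a) (RtoC b).
Proof. apply Cx_ext; simpl; ring. Qed.
Lemma csum_ext n f g : (forall i, (i < n)%nat -> f i = g i) -> csum n f = csum n g.
Proof. induction n; simpl; intros H; auto. rewrite IHn, H; auto. Qed.
Lemma csum_plus n f g : csum n (fun i => Cadd (f i) (g i)) = Cadd (csum n f) (csum n g).
Proof. induction n; simpl; [ring| rewrite IHn; ring]. Qed.
Lemma csum_scal n c f : csum n (fun i => Cmul c (f i)) = Cmul c (csum n f).
Proof. induction n; simpl; [ring| rewrite IHn; ring]. Qed.
Lemma csum_zero n f : (forall i, (i < n)%nat -> f i = RtoC 0) -> csum n f = RtoC 0.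
Proof. induction n; simpl; intros H; auto. rewrite IHn, H; auto; ring. Qed.
Lemma csum_swap n m f : csum n (fun i => csum m (fun j => f i j)) = csum m (fun j => csum n (fun i => f i j)).
Proof. induction n; simpl. rewrite csum_zero; auto. rewrite IHn, <- csum_plus; auto. Qed.
Lemma RtoC_rsum n f : RtoC (rsum n f) = csum n (fun i => RtoC (f i)).
Proof. induction n; simpl; auto. rewrite RtoC_plus, IHn; auto. Qed.
Lemma csum_single n j f : (j < n)%nat -> (forall i, (i < n)%nat -> i <> j -> f i = RtoC 0) -> csum n f = f j.
Proof.
  induction n; intros Hj H; [lia|]. simpl. destruct (Nat.eq_dec j n) as [->|Hne].
  - rewrite csum_zero; [ring|]. intros; apply H; lia.
  - rewrite IHn; [|lia|intros; apply H; lia]. rewrite (H n); [ring|lia|lia].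
Qed.
Lemma csum_delta n j f : (j < n)%nat -> csum n (fun i => Cmul (RtoC (delta i j)) (f i)) = f j.
Proof. intros Hj. rewrite (csum_single n j); auto. unfold delta; rewrite Nat.eqb_refl; ring.
  intros i _ Hi. unfold delta. apply Nat.eqb_neq in Hi; rewrite Hi; ring. Qed.

Lemma Sample_eq s s' : (forall t, sx s t = sx s' t) -> (forall t, sxp s t = sxp s' t) ->
  (forall t, sy s t = sy s' t) -> s = s'.
Proof.
  destruct s as [a b c], s' as [a' b' c']; simpl; intros H1 H2 H3.
  apply functional_extensionality in H1, H2, H3. subst; auto.
Qed.

Lemma sig_eq {A} (P : A -> Prop) (a b : {x | P x}) : proj1_sig a = proj1_sig b -> a = b.
Proof. destruct a, b; simpl; intros; subst. f_equal; apply proof_irrelevance. Qed.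

Lemma rprod_nonneg n f : (forall i, (i < n)%nat -> 0 <= f i) -> 0 <= rprod n f.
Proof. induction n; simpl; intros H; [lra|]. apply Rmult_le_pos; [apply IHn; intros; apply H; lia| apply H; lia]. Qed.
Lemma rprod_ext n f g : (forall i, (i < n)%nat -> f i = g i) -> rprod n f = rprod n g.
Proof. induction n; simpl; intros H; auto. rewrite IHn, H; auto. Qed.
Lemma rprod_mult n f g : rprod n (fun i => f i * g i) = rprod n f * rprod n g.
Proof. induction n; simpl; [ring| rewrite IHn; ring]. Qed.

Definition trunc (T : nat) (s : Sample) : Sample :=
  mkSample (fun t => if Nat.leb t T then sx s t else O)
           (fun t => if Nat.leb t T then sxp s t else O)
           (fun t => if Nat.leb t T then sy s t else O).
Definition extd (T : nat) (s : Sample) (x' x y : nat) : Sample :=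
  mkSample (fun t => if Nat.eqb t (S T) then x else sx s t)
           (fun t => if Nat.eqb t (S T) then x' else sxp s t)
           (fun t => if Nat.eqb t (S T) then y else sy s t).

Section Model.
Variable r : nat.
Variable q : nat -> nat -> R.
Variable nu : nat -> R.
Variables p00 p10 : nat -> R.
Hypothesis hr : (1 <= r)%nat.
Hypothesis hq01 : forall x z, (x <= r)%nat -> (z <= r - 1)%nat -> 0 <= q x z <= 1.
Hypothesis hnu0 : forall x, (x <= r)%nat -> 0 <= nu x.
Hypothesis hp00 : forall n, 0 <= p00 n.
Hypothesis hp10 : forall n, 0 <= p10 n.

Definition Omega1 (T : nat) : Type := { s : Sample | canon1 r T s }.
Definition Step : Type := ((BN r * BN r) * nat)%type.

Lemma canon_trunc T s : canon1 r (S T) s -> canon1 r T (trunc T s).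
Proof.
  intros (H0 & H1 & H2 & H3 & H4). unfold trunc; repeat split; simpl.
  - destruct (Nat.leb 0 T); auto; lia.
  - destruct (Nat.leb 0 T); auto.
  - destruct (Nat.leb 0 T); auto.
  - destruct (Nat.leb_spec t T); [apply H3; lia| lia].
  - destruct (Nat.leb_spec t T); [apply H3; lia| lia].
  - destruct (Nat.leb_spec t T); [lia| auto].
  - destruct (Nat.leb_spec t T); [lia| auto].
  - destruct (Nat.leb_spec t T); [lia| auto].
Qed.

Lemma canon_extd T s x' x y : canon1 r T s -> (x' <= r)%nat -> (x <= r)%nat ->
  canon1 r (S T) (extd T s x' x y).
Proof.
  intros (H0 & H1 & H2 & H3 & H4) Hx' Hx. unfold extd; repeat split; simpl; auto.
  - destruct (Nat.eqb_spec t (S T)); auto. apply H3; lia.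
  - destruct (Nat.eqb_spec t (S T)); auto. apply H3; lia.
  - destruct (Nat.eqb_spec t (S T)); [lia|]. apply H4; lia.
  - destruct (Nat.eqb_spec t (S T)); [lia|]. apply H4; lia.
  - destruct (Nat.eqb_spec t (S T)); [lia|]. apply H4; lia.
Qed.

Definition fwd1 (T : nat) (a : Omega1 (S T)) : Omega1 T * Step :=
  let s := proj1_sig a in
  (exist _ (trunc T s) (canon_trunc T s (proj2_sig a)),
   ((mkBN r (sxp s (S T)), mkBN r (sx s (S T))), sy s (S T))).
Definition bwd1 (T : nat) (p : Omega1 T * Step) : Omega1 (S T) :=
  match p with (a, ((b1, b2), y)) =>
    exist _ (extd T (proj1_sig a) (proj1_sig b1) (proj1_sig b2) y)
      (canon_extd T _ _ _ y (proj2_sig a) (proj2_sig b1) (proj2_sig b2)) end.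

Lemma bwd_fwd1 T a : bwd1 T (fwd1 T a) = a.
Proof.
  destruct a as [s Hs]. apply sig_eq. simpl.
  pose proof Hs as (H0 & H1 & H2 & H3 & H4).
  assert (B : (1 <= S T <= S T)%nat) by lia. destruct (H3 _ B) as [Bx Bxp].
  rewrite !mkBN_val by auto.
  apply Sample_eq; intros t; unfold extd, trunc; simpl;
  (destruct (Nat.eqb_spec t (S T)); [subst; auto|]);
  (destruct (Nat.leb_spec t T); [auto|]); symmetry; apply H4; lia.
Qed.

Lemma fwd_bwd1 T p : fwd1 T (bwd1 T p) = p.
Proof.
  destruct p as [[s Hs] [[[b1 Hb1] [b2 Hb2]] y]]. unfold fwd1, bwd1; simpl.
  pose proof Hs as (H0 & H1 & H2 & H3 & H4).
  assert (E1 : exist (canon1 r T) (trunc T (extd T s b1 b2 y))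
          (canon_trunc T (extd T s b1 b2 y) (canon_extd T s b1 b2 y Hs Hb1 Hb2)) = exist _ s Hs).
  2:{ rewrite E1. rewrite !Nat.eqb_refl.
      assert (Eb1 : mkBN r b1 = exist _ b1 Hb1) by (apply BN_eq; rewrite mkBN_val; auto).
      assert (Eb2 : mkBN r b2 = exist _ b2 Hb2) by (apply BN_eq; rewrite mkBN_val; auto).
      rewrite Eb1, Eb2. reflexivity. }
  - apply sig_eq; simpl. apply Sample_eq; intros t; unfold extd, trunc; simpl;
    (destruct (Nat.leb_spec t T); [destruct (Nat.eqb_spec t (S T)); [lia|auto]|]);
    symmetry; apply H4; lia.
Qed.

Definition stepfac (z x' x y : nat) : R := Ml q r x' z * Ms q x x' * pem p00 p10 x x' y.

Lemma P1_agree T s s' : (forall t, (t <= T)%nat -> sx s t = sx s' t /\ sxp s t = sxp s' t /\ sy s t = sy s' t) ->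
  P1 q nu p00 p10 r T s = P1 q nu p00 p10 r T s'.
Proof.
  intros H. unfold P1. destruct (H O) as [-> _]; [lia|]. f_equal. apply rprod_ext. intros i Hi.
  destruct (H (S i)) as (A1 & A2 & A3); [lia|]. destruct (H (S i - 1)%nat) as (B1 & _); [lia|].
  cbv beta zeta. rewrite A1, A2, A3, B1. reflexivity.
Qed.

Lemma P1_S T s : P1 q nu p00 p10 r (S T) s =
  P1 q nu p00 p10 r T (trunc T s) * stepfac (sx s T) (sxp s (S T)) (sx s (S T)) (sy s (S T)).
Proof.
  rewrite (P1_agree T (trunc T s) s).
  - unfold P1, stepfac. simpl rprod. rewrite Nat.sub_0_r. ring.
  - intros t Ht. unfold trunc; simpl. replace (Nat.leb t T) with true by (symmetry; apply Nat.leb_le; lia).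
    auto.
Qed.

Lemma Ml_nonneg x' z : (x' <= r)%nat -> (z <= r)%nat -> 0 <= Ml q r x' z.
Proof. intros. unfold Ml, delta. destruct (Nat.eqb z 0); [destruct (Nat.eqb x' 0); lra|].
  destruct (Nat.eqb_spec z r); [destruct (Nat.eqb x' r); lra|]. apply hq01; lia. Qed.
Lemma Ms_nonneg x x' : (x <= r)%nat -> (x' <= r)%nat -> 0 <= Ms q x x'.
Proof. intros. unfold Ms, delta. destruct (Nat.eqb x' 0); [apply hq01; lia|].
  destruct (Nat.eqb x x'); lra. Qed.
Lemma pem_nonneg x x' y : 0 <= pem p00 p10 x x' y.
Proof. unfold pem. destruct (Nat.eqb x' 0); [destruct (Nat.eqb x 0); auto|]. destruct (Nat.eqb y 0); lra. Qed.

Lemma P1_nonneg T s : canon1 r T s -> 0 <= P1 q nu p00 p10 r T s.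
Proof.
  intros (H0 & H1 & H2 & H3 & H4). unfold P1. apply Rmult_le_pos; [apply hnu0; auto|].
  apply rprod_nonneg. intros i Hi. simpl. rewrite Nat.sub_0_r.
  assert (B : (1 <= S i <= T)%nat) by lia. destruct (H3 _ B) as [Bx Bxp].
  assert (Bi : (sx s i <= r)%nat) by (destruct i; [auto| apply H3; lia]).
  apply Rmult_le_pos; [apply Rmult_le_pos|]; [apply Ml_nonneg| apply Ms_nonneg| apply pem_nonneg]; auto.
Qed.

Definition G (k : nat -> nat -> R) (T : nat) (s : Sample) : R := rprod T (fun i => k (S i) (sy s (S i))).

Lemma G_S k T s : G k (S T) s = G k T (trunc T s) * k (S T) (sy s (S T)).
Proof. unfold G. change (rprod (S T) ?f) with (rprod T f * f T). f_equal. apply rprod_ext. intros i Hi.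
  unfold trunc. cbv beta. unfold sy at 2.
  replace (Nat.leb (S i) T) with true by (symmetry; apply Nat.leb_le; lia). auto. Qed.

Definition Kf (k : nat -> nat -> R) (E00 E10 : nat -> R) (t x x' : nat) : R :=
  if Nat.eqb x' 0 then (if Nat.eqb x 0 then E00 t else E10 t) else k t O.
Definition Mlv (u : nat -> R) (x' : nat) : R := rsum (S r) (fun z => Ml q r x' z * u z).
Fixpoint Fk (k : nat -> nat -> R) (E00 E10 : nat -> R) (T : nat) : nat -> R :=
  match T with
  | O => nu
  | S T' => fun x => rsum (S r) (fun x' => Ms q x x' * Kf k E00 E10 (S T') x x' * Mlv (Fk k E00 E10 T') x')
  end.

Lemma canon0 (b : BN r) : canon1 r 0 (mkSample (fun t => if Nat.eqb t 0 then proj1_sig b else O) (fun _ => O) (fun _ => O)).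
Proof. destruct b as [x Hx]; repeat split; simpl; auto; intros; try lia.
  destruct (Nat.eqb_spec t 0); auto; lia. Qed.

Section FL.
Variable k : nat -> nat -> R.
Variables E00 E10 : nat -> R.
Hypothesis hk : forall t y, 0 <= k t y.
Hypothesis hE00 : forall t, has_sum (fun n => p00 n * k t n) (E00 t).
Hypothesis hE10 : forall t, has_sum (fun n => p10 n * k t n) (E10 t).

Lemma pem_sum t x x' : has_sum (fun y => pem p00 p10 x x' y * k t y) (Kf k E00 E10 t x x').
Proof.
  unfold pem, Kf. destruct (Nat.eqb x' 0); [destruct (Nat.eqb x 0); auto|].
  apply (has_sum_eq _ (fsum (fun y => (if Nat.eqb y 0 then 1 else 0) * k t y) (O :: nil))).
  - simpl; ring.
  - apply has_sum_support. repeat constructor; auto.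
    intros a Ha. destruct (Nat.eqb_spec a 0); [left; auto|]. exfalso; apply Ha; ring.
Qed.

Lemma Kf_nonneg t x x' : 0 <= Kf k E00 E10 t x x'.
Proof. apply (has_sum_ge0 _ _ (pem_sum t x x')). intros; apply Rmult_le_pos; [apply pem_nonneg| auto]. Qed.

Lemma F_lemma T : forall phi, (forall x, (x <= r)%nat -> 0 <= phi x) ->
  has_sum (fun a : Omega1 T => P1 q nu p00 p10 r T (proj1_sig a) * G k T (proj1_sig a) * phi (sx (proj1_sig a) T))
    (rsum (S r) (fun x => Fk k E00 E10 T x * phi x)).
Proof.
  induction T as [|T IH]; intros phi Hphi.
  -
    set (f0 := fun b : BN r => exist (canon1 r 0) (mkSample (fun t => if Nat.eqb t 0 then proj1_sig b else O) (fun _ => O) (fun _ => O))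
      (canon0 b) : Omega1 0).
    set (g0 := fun a : Omega1 0 => mkBN r (sx (proj1_sig a) 0)).
    apply (has_sum_iso f0 g0).
    + intros [x Hx]. apply BN_eq. unfold g0, f0; simpl. rewrite mkBN_val; auto.
    + intros [s Hs]. apply sig_eq. unfold g0, f0; simpl. pose proof Hs as (H0 & H1 & H2 & H3 & H4).
      rewrite mkBN_val by auto. apply Sample_eq; intros t; simpl.
      * destruct (Nat.eqb_spec t 0); [subst; auto|]. symmetry; apply H4; lia.
      * destruct t; auto. symmetry; apply H4; lia.
      * destruct t; auto. symmetry; apply H4; lia.
    + apply (has_sum_ext (fun b : BN r => nu (proj1_sig b) * phi (proj1_sig b))).
      * intros [x Hx]. simpl. unfold P1, G. simpl. ring.
      * apply (has_sum_BN r (fun x => nu x * phi x)).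
  -
    set (psi := fun z => rsum (S r) (fun x' => rsum (S r) (fun x => Ml q r x' z * Ms q x x' * Kf k E00 E10 (S T) x x' * phi x))).
    assert (Hpsi : forall z, (z <= r)%nat -> 0 <= psi z).
    { intros z Hz. apply rsum_nonneg; intros x' Hx'; apply rsum_nonneg; intros x Hx.
      repeat apply Rmult_le_pos; try apply Ml_nonneg; try apply Ms_nonneg; try apply Kf_nonneg; try apply Hphi; lia. }
    apply (has_sum_eq _ (rsum (S r) (fun z => Fk k E00 E10 T z * psi z))).
    { cbn [Fk]. unfold psi, Mlv.
      rewrite (rsum_ext (S r) _ (fun z => rsum (S r) (fun x' => rsum (S r) (fun x => Fk k E00 E10 T z * (Ml q r x' z * Ms q x x' * Kf k E00 E10 (S T) x x' * phi x))))).
      2:{ intros; rewrite <- rsum_scal; apply rsum_ext; intros; rewrite <- rsum_scal; auto. }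
      rewrite rsum_swap.
      rewrite (rsum_ext (S r) _ (fun x' => rsum (S r) (fun x => rsum (S r) (fun z => Fk k E00 E10 T z * (Ml q r x' z * Ms q x x' * Kf k E00 E10 (S T) x x' * phi x))))).
      2:{ intros; apply rsum_swap. }
      rewrite rsum_swap. apply rsum_ext; intros x Hx.
      rewrite <- rsum_scal_r. apply rsum_ext; intros x' Hx'.
      rewrite <- !rsum_scal, <- rsum_scal_r. apply rsum_ext; intros z Hz. ring. }
    apply (has_sum_iso (bwd1 T) (fwd1 T)); [apply fwd_bwd1| apply bwd_fwd1|].
    apply (tonelli _ (fun a : Omega1 T => P1 q nu p00 p10 r T (proj1_sig a) * G k T (proj1_sig a) * psi (sx (proj1_sig a) T))).
    + intros [[s Hs] [[[b1 Hb1] [b2 Hb2]] y]]. unfold bwd1; cbv beta iota; cbn [proj1_sig].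
      assert (Hc : canon1 r (S T) (extd T s b1 b2 y)) by (apply canon_extd; auto).
      apply Rmult_le_pos; [apply Rmult_le_pos|].
      * apply P1_nonneg; auto.
      * unfold G. apply rprod_nonneg; intros; auto.
      * apply Hphi. unfold extd; simpl; rewrite Nat.eqb_refl; auto.
    + intros [s Hs]. simpl.
      pose proof Hs as (H0 & H1 & H2 & H3 & H4).
      assert (Hz : (sx s T <= r)%nat) by (destruct T; [auto| apply H3; lia]).
      set (c := P1 q nu p00 p10 r T s * G k T s).
      assert (Hc0 : 0 <= c) by (apply Rmult_le_pos; [apply P1_nonneg; auto| unfold G; apply rprod_nonneg; auto]).
      assert (Etr : trunc T (extd T s 0 0 0) = s).
      { apply Sample_eq; intros t; unfold trunc, extd; simpl;
        (destruct (Nat.leb_spec t T); [destruct (Nat.eqb_spec t (S T)); [lia|auto]|]); symmetry; apply H4; lia. }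
      apply (has_sum_ext (fun st : Step =>
        c * (Ml q r (proj1_sig (fst (fst st))) (sx s T) * Ms q (proj1_sig (snd (fst st))) (proj1_sig (fst (fst st))) * phi (proj1_sig (snd (fst st))))
          * (pem p00 p10 (proj1_sig (snd (fst st))) (proj1_sig (fst (fst st))) (snd st) * k (S T) (snd st)))).
      { intros [[[b1 Hb1] [b2 Hb2]] y]. unfold bwd1; cbv beta iota; cbn [proj1_sig fst snd].
        rewrite P1_S, G_S. unfold stepfac.
        assert (Etr' : trunc T (extd T s b1 b2 y) = s).
        { apply Sample_eq; intros t; unfold trunc, extd; simpl;
          (destruct (Nat.leb_spec t T); [destruct (Nat.eqb_spec t (S T)); [lia|auto]|]); symmetry; apply H4; lia. }
        rewrite Etr'. unfold extd; cbn [sx sxp sy]. rewrite !Nat.eqb_refl.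
        replace (Nat.eqb T (S T)) with false by (symmetry; apply Nat.eqb_neq; lia).
        unfold c. ring. }
      apply (tonelli _ (fun bb : BN r * BN r => c * (Ml q r (proj1_sig (fst bb)) (sx s T) * Ms q (proj1_sig (snd bb)) (proj1_sig (fst bb)) * phi (proj1_sig (snd bb))) * Kf k E00 E10 (S T) (proj1_sig (snd bb)) (proj1_sig (fst bb)))).
      * intros [[[b1 Hb1] [b2 Hb2]] y]. cbn [proj1_sig fst snd].
        apply Rmult_le_pos; [apply Rmult_le_pos; [auto|]|apply Rmult_le_pos; [apply pem_nonneg| auto]].
        apply Rmult_le_pos; [apply Rmult_le_pos; [apply Ml_nonneg| apply Ms_nonneg]| apply Hphi]; auto.
      * intros [[b1 Hb1] [b2 Hb2]]. cbn [proj1_sig fst snd]. apply has_sum_scal. apply pem_sum.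
      * apply (has_sum_eq _ (c * psi (sx s T))); [unfold c; ring|].
        apply (has_sum_ext (fun bb : BN r * BN r => c * (Ml q r (proj1_sig (fst bb)) (sx s T) * Ms q (proj1_sig (snd bb)) (proj1_sig (fst bb)) * Kf k E00 E10 (S T) (proj1_sig (snd bb)) (proj1_sig (fst bb)) * phi (proj1_sig (snd bb))))).
        { intros; ring. }
        apply has_sum_scal. unfold psi.
        apply (tonelli _ (fun b : BN r => rsum (S r) (fun x => Ml q r (proj1_sig b) (sx s T) * Ms q x (proj1_sig b) * Kf k E00 E10 (S T) x (proj1_sig b) * phi x))).
        -- intros [[b1 Hb1] [b2 Hb2]]. cbn [proj1_sig fst snd].
           apply Rmult_le_pos; [apply Rmult_le_pos; [apply Rmult_le_pos|]|]; try apply Ml_nonneg; try apply Ms_nonneg; try apply Kf_nonneg; try apply Hphi; auto.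
        -- intros b. cbn [fst snd]. apply (has_sum_BN r (fun x => Ml q r (proj1_sig b) (sx s T) * Ms q x (proj1_sig b) * Kf k E00 E10 (S T) x (proj1_sig b) * phi x)).
        -- apply (has_sum_BN r (fun x' => rsum (S r) (fun x => Ml q r x' (sx s T) * Ms q x x' * Kf k E00 E10 (S T) x x' * phi x))).
    + apply IH; auto.
Qed.
End FL.
End Model.

Section Copies.
Variable r T : nat.
Variable q : nat -> nat -> R.
Variable nu : nat -> R.
Variables p00 p10 : nat -> R.
Hypothesis hr : (1 <= r)%nat.
Hypothesis hq01 : forall x z, (x <= r)%nat -> (z <= r - 1)%nat -> 0 <= q x z <= 1.
Hypothesis hnu0 : forall x, (x <= r)%nat -> 0 <= nu x.
Hypothesis hp00 : forall n, 0 <= p00 n.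
Hypothesis hp10 : forall n, 0 <= p10 n.

Definition truncm (m : nat) (w : nat -> Sample) : nat -> Sample :=
  fun k => if Nat.ltb k m then w k else zeroS.

Lemma canon_truncm m w : canon r T (S m) w -> canon r T m (truncm m w).
Proof. intros [H1 H2]; split; intros k Hk; unfold truncm.
  - replace (Nat.ltb k m) with true by (symmetry; apply Nat.ltb_lt; lia). apply H1; lia.
  - replace (Nat.ltb k m) with false by (symmetry; apply Nat.ltb_ge; lia). auto. Qed.
Lemma canon_last m w : canon r T (S m) w -> canon1 r T (w m).
Proof. intros [H1 _]; apply H1; lia. Qed.
Definition joinm (m : nat) (w : nat -> Sample) (s : Sample) : nat -> Sample :=
  fun k => if Nat.eqb k m then s else w k.
Lemma canon_joinm m w s : canon r T m w -> canon1 r T s -> canon r T (S m) (joinm m w s).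
Proof. intros [H1 H2] Hs; split; intros k Hk; unfold joinm; destruct (Nat.eqb_spec k m); auto; try lia.
  - apply H1; lia.
  - apply H2; lia. Qed.

Definition fwdm (m : nat) (a : Omega r T (S m)) : Omega r T m * Omega1 r T :=
  (exist _ (truncm m (proj1_sig a)) (canon_truncm m _ (proj2_sig a)),
   exist _ (proj1_sig a m) (canon_last m _ (proj2_sig a))).
Definition bwdm (m : nat) (p : Omega r T m * Omega1 r T) : Omega r T (S m) :=
  exist _ (joinm m (proj1_sig (fst p)) (proj1_sig (snd p))) (canon_joinm m _ _ (proj2_sig (fst p)) (proj2_sig (snd p))).

Lemma bwd_fwdm m a : bwdm m (fwdm m a) = a.
Proof. destruct a as [w [H1 H2]]. apply sig_eq. simpl. apply functional_extensionality; intros k.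
  unfold joinm, truncm. destruct (Nat.eqb_spec k m); [subst; auto|].
  destruct (Nat.ltb_spec k m); auto. symmetry; apply H2; lia. Qed.
Lemma fwd_bwdm m p : fwdm m (bwdm m p) = p.
Proof. destruct p as [[w [H1 H2]] [s Hs]]. unfold fwdm, bwdm; apply injective_projections; cbn [fst snd]; apply sig_eq; simpl.
  - apply functional_extensionality; intros k. unfold joinm, truncm.
    destruct (Nat.ltb_spec k m); [destruct (Nat.eqb_spec k m); auto; lia|]. symmetry; apply H2; lia.
  - unfold joinm; rewrite Nat.eqb_refl; auto. Qed.

Definition PP m (a : Omega r T m) := Pm q nu p00 p10 r T m a.
Definition PP1 (a : Omega1 r T) := P1 q nu p00 p10 r T (proj1_sig a).

Lemma Pm_S m a : PP (S m) a = PP m (fst (fwdm m a)) * PP1 (snd (fwdm m a)).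
Proof. unfold PP, PP1, Pm, fwdm; simpl. f_equal. apply rprod_ext; intros i Hi. unfold truncm.
  replace (Nat.ltb i m) with true by (symmetry; apply Nat.ltb_lt; lia). auto. Qed.
Lemma Ym_S m t a : @Ym r T (S m) t a = @Ym r T m t (fst (fwdm m a)) + INR (sy (proj1_sig (snd (fwdm m a))) t).
Proof. unfold Ym, fwdm; simpl. f_equal. apply rsum_ext; intros i Hi. unfold truncm.
  replace (Nat.ltb i m) with true by (symmetry; apply Nat.ltb_lt; lia). auto. Qed.

Lemma PP_nonneg m a : 0 <= PP m a.
Proof. destruct a as [w [H1 H2]]. unfold PP, Pm; simpl. apply rprod_nonneg. intros; apply P1_nonneg; auto. Qed.
Lemma PP1_nonneg a : 0 <= PP1 a.
Proof. destruct a as [s Hs]. unfold PP1; simpl. apply P1_nonneg; auto. Qed.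
Lemma Ym_nonneg m t a : 0 <= @Ym r T m t a.
Proof. unfold Ym. apply rsum_nonneg. intros; apply pos_INR. Qed.

Lemma zero_canon : canon r T 0 (fun _ => zeroS).
Proof. split; intros; [lia| auto]. Qed.

Lemma has_sum_M0 (f : Omega r T 0 -> R) : has_sum f (f (exist _ _ zero_canon)).
Proof.
  apply (has_sum_eq _ (fsum f (exist _ _ zero_canon :: nil))); [simpl; ring|].
  apply has_sum_support; [repeat constructor; auto|].
  intros a _. left. apply sig_eq. destruct a as [w [H1 H2]]. simpl.
  apply functional_extensionality; intros k. symmetry; apply H2; lia.
Qed.

Lemma M_lemma t t' a1 a2 b :
  has_sum PP1 1 ->
  has_sum (fun a => PP1 a * INR (sy (proj1_sig a) t)) a1 ->
  has_sum (fun a => PP1 a * INR (sy (proj1_sig a) t')) a2 ->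
  has_sum (fun a => PP1 a * (INR (sy (proj1_sig a) t) * INR (sy (proj1_sig a) t'))) b ->
  forall m,
  has_sum (PP m) 1 /\
  has_sum (fun a => PP m a * Ym t a) (INR m * a1) /\
  has_sum (fun a => PP m a * Ym t' a) (INR m * a2) /\
  has_sum (fun a => PP m a * (Ym t a * Ym t' a)) (INR m * b + INR m * (INR m - 1) * a1 * a2).
Proof.
  intros H1 Ha1 Ha2 Hb m. induction m as [|m [I1 [I2 [I3 I4]]]].
  - simpl. refine (conj _ (conj _ (conj _ _)));
    (eapply has_sum_eq; [|apply has_sum_M0]); unfold PP, Pm, Ym; simpl; ring.
  - set (A := Omega r T m). set (B := Omega1 r T).
    assert (Hp0 : forall x, 0 <= PP m x) by apply PP_nonneg.
    assert (Hq0 : forall x, 0 <= PP1 x) by apply PP1_nonneg.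
    assert (Prod : forall (f : A -> R) (g : B -> R) u v h, (forall x, 0 <= f x) -> (forall y, 0 <= g y) ->
       has_sum f u -> has_sum g v -> (forall a, h a = f (fst (fwdm m a)) * g (snd (fwdm m a))) -> has_sum h (u * v)).
    { intros f g u v h Hf Hg Hu Hv Eh. apply (has_sum_iso (bwdm m) (fwdm m)); [apply fwd_bwdm| apply bwd_fwdm|].
      apply (has_sum_ext (fun p => f (fst p) * g (snd p))); [intros p; rewrite Eh, fwd_bwdm; auto|].
      apply has_sum_prod; auto. }
    assert (Y0 : forall t0 (x : A), 0 <= PP m x * Ym t0 x) by (intros; apply Rmult_le_pos; auto; apply Ym_nonneg).
    assert (Y1 : forall t0 (y : B), 0 <= PP1 y * INR (sy (proj1_sig y) t0)) by (intros; apply Rmult_le_pos; auto; apply pos_INR).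
    rewrite S_INR. refine (conj _ (conj _ (conj _ _))).
    + eapply has_sum_eq; [|apply (Prod (PP m) PP1 1 1); auto; intros; apply Pm_S]. ring.
    + assert (S1 : has_sum (fun a : Omega r T (S m) => PP m (fst (fwdm m a)) * Ym t (fst (fwdm m a)) * PP1 (snd (fwdm m a))) ((INR m * a1) * 1))
        by (apply (Prod (fun x => PP m x * Ym t x) PP1); auto).
      assert (S2 : has_sum (fun a : Omega r T (S m) => PP m (fst (fwdm m a)) * (PP1 (snd (fwdm m a)) * INR (sy (proj1_sig (snd (fwdm m a))) t))) (1 * a1))
        by (apply (Prod (PP m) (fun y => PP1 y * INR (sy (proj1_sig y) t))); auto).
      pose proof (has_sum_plus _ _ _ _ S1 S2) as SS.
      eapply has_sum_eq; [|eapply has_sum_ext; [|exact SS]].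
      * ring.
      * intros a. cbv beta. rewrite Pm_S, Ym_S. ring.
    + assert (S1 : has_sum (fun a : Omega r T (S m) => PP m (fst (fwdm m a)) * Ym t' (fst (fwdm m a)) * PP1 (snd (fwdm m a))) ((INR m * a2) * 1))
        by (apply (Prod (fun x => PP m x * Ym t' x) PP1); auto).
      assert (S2 : has_sum (fun a : Omega r T (S m) => PP m (fst (fwdm m a)) * (PP1 (snd (fwdm m a)) * INR (sy (proj1_sig (snd (fwdm m a))) t'))) (1 * a2))
        by (apply (Prod (PP m) (fun y => PP1 y * INR (sy (proj1_sig y) t'))); auto).
      pose proof (has_sum_plus _ _ _ _ S1 S2) as SS.
      eapply has_sum_eq; [|eapply has_sum_ext; [|exact SS]].
      * ring.
      * intros a. cbv beta. rewrite Pm_S, Ym_S. ring.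
    + set (F1 := fun a : Omega r T (S m) => PP m (fst (fwdm m a)) * (Ym t (fst (fwdm m a)) * Ym t' (fst (fwdm m a))) * PP1 (snd (fwdm m a))).
      set (F2 := fun a : Omega r T (S m) => PP m (fst (fwdm m a)) * Ym t (fst (fwdm m a)) * (PP1 (snd (fwdm m a)) * INR (sy (proj1_sig (snd (fwdm m a))) t'))).
      set (F3 := fun a : Omega r T (S m) => PP m (fst (fwdm m a)) * Ym t' (fst (fwdm m a)) * (PP1 (snd (fwdm m a)) * INR (sy (proj1_sig (snd (fwdm m a))) t))).
      set (F4 := fun a : Omega r T (S m) => PP m (fst (fwdm m a)) * (PP1 (snd (fwdm m a)) * (INR (sy (proj1_sig (snd (fwdm m a))) t) * INR (sy (proj1_sig (snd (fwdm m a))) t')))).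
      assert (S1 : has_sum F1 ((INR m * b + INR m * (INR m - 1) * a1 * a2) * 1)).
      { apply (Prod (fun x => PP m x * (Ym t x * Ym t' x)) PP1); auto.
        intros; apply Rmult_le_pos; auto; apply Rmult_le_pos; apply Ym_nonneg. }
      assert (S2 : has_sum F2 ((INR m * a1) * a2)) by (apply (Prod (fun x => PP m x * Ym t x) (fun y => PP1 y * INR (sy (proj1_sig y) t'))); auto).
      assert (S3 : has_sum F3 ((INR m * a2) * a1)) by (apply (Prod (fun x => PP m x * Ym t' x) (fun y => PP1 y * INR (sy (proj1_sig y) t))); auto).
      assert (S4 : has_sum F4 (1 * b)) by (apply (Prod (PP m) (fun y => PP1 y * (INR (sy (proj1_sig y) t) * INR (sy (proj1_sig y) t')))); auto;
         intros; apply Rmult_le_pos; auto; apply Rmult_le_pos; apply pos_INR).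
      pose proof (has_sum_plus _ _ _ _ (has_sum_plus _ _ _ _ S1 S2) (has_sum_plus _ _ _ _ S3 S4)) as SS.
      eapply has_sum_eq; [|eapply has_sum_ext; [|exact SS]].
      * ring.
      * intros a. unfold F1, F2, F3, F4. rewrite Pm_S, !Ym_S. ring.
Qed.
End Copies.

Section Calc.
Variable r : nat.
Variable q : nat -> nat -> R.
Variable nu : nat -> R.
Variables p00 p10 : nat -> R.
Variables e00 e10 f00 f10 : R.
Hypothesis hr : (1 <= r)%nat.
Hypothesis hq01 : forall x z, (x <= r)%nat -> (z <= r - 1)%nat -> 0 <= q x z <= 1.
Hypothesis hqsum : forall z, (z <= r - 1)%nat -> rsum (S r) (fun x => q x z) = 1.
Hypothesis hnu0 : forall x, (x <= r)%nat -> 0 <= nu x.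
Hypothesis hnu1 : rsum (S r) nu = 1.
Hypothesis hp00 : forall n, 0 <= p00 n.
Hypothesis hp10 : forall n, 0 <= p10 n.
Hypothesis hp00s : has_sum p00 1.
Hypothesis hp10s : has_sum p10 1.
Hypothesis he00 : has_sum (fun n => p00 n * INR n) e00.
Hypothesis he10 : has_sum (fun n => p10 n * INR n) e10.
Hypothesis hf00 : has_sum (fun n => p00 n * INR n ^ 2) f00.
Hypothesis hf10 : has_sum (fun n => p10 n * INR n ^ 2) f10.
Hypothesis hq00 : 0 < q O O < 1.

Definition Mv (u : nat -> R) (x : nat) : R := rsum (S r) (fun x' => Ms q x x' * Mlv r q u x').
Fixpoint Mp (n : nat) (u : nat -> R) : nat -> R :=
  match n with O => u | S n' => Mv (Mp n' u) end.

Definition kk (t0 t1 t y : nat) : R := (if Nat.eqb t t0 then INR y else 1) * (if Nat.eqb t t1 then INR y else 1).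
Definition cc (a b : R) (t0 t1 t : nat) : R :=
  if Nat.eqb t t0 then (if Nat.eqb t t1 then b else a) else (if Nat.eqb t t1 then a else 1).

Lemma kk_nonneg t0 t1 t y : 0 <= kk t0 t1 t y.
Proof. unfold kk. pose proof (pos_INR y). destruct (Nat.eqb t t0), (Nat.eqb t t1); nra. Qed.

Lemma kk_sum (p : nat -> R) a b : has_sum p 1 -> has_sum (fun n => p n * INR n) a ->
  has_sum (fun n => p n * INR n ^ 2) b -> forall t0 t1 t, has_sum (fun n => p n * kk t0 t1 t n) (cc a b t0 t1 t).
Proof.
  intros H1 Ha Hb t0 t1 t. unfold kk, cc. destruct (Nat.eqb t t0), (Nat.eqb t t1).
  - eapply has_sum_ext; [|exact Hb]. intros; simpl; ring.
  - eapply has_sum_ext; [|exact Ha]. intros; simpl; ring.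
  - eapply has_sum_ext; [|exact Ha]. intros; simpl; ring.
  - eapply has_sum_ext; [|exact H1]. intros; simpl; ring.
Qed.

Definition FF t0 t1 := Fk r q nu (kk t0 t1) (cc e00 f00 t0 t1) (cc e10 f10 t0 t1).

Lemma FF_A t0 t1 n : S n <> t0 -> S n <> t1 -> forall x, FF t0 t1 (S n) x = Mv (FF t0 t1 n) x.
Proof.
  intros H0 H1 x. unfold FF. cbn [Fk]. unfold Mv. apply rsum_ext; intros x' _.
  unfold Kf, kk, cc. apply Nat.eqb_neq in H0, H1. rewrite H0, H1.
  destruct (Nat.eqb x' 0), (Nat.eqb x 0); ring.
Qed.

Lemma FF_B t0 t1 n : (S n = t0 \/ S n = t1) -> forall x,
  FF t0 t1 (S n) x = q x O * (if Nat.eqb x 0 then cc e00 f00 t0 t1 (S n) else cc e10 f10 t0 t1 (S n)) * Mlv r q (FF t0 t1 n) O.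
Proof.
  intros H x. unfold FF. cbn [Fk]. rewrite (rsum_single (S r) O); [|lia|].
  - unfold Kf, Ms. simpl. ring.
  - intros i _ Hi. unfold Kf, kk. apply Nat.eqb_neq in Hi. rewrite Hi. simpl.
    destruct H as [<-|<-]; rewrite Nat.eqb_refl; ring.
Qed.

Lemma FF_prop t0 t1 a d : (forall j, (a < j <= a + d)%nat -> j <> t0 /\ j <> t1) ->
  forall x, FF t0 t1 (a + d) x = Mp d (FF t0 t1 a) x.
Proof.
  induction d; intros H x.
  - rewrite Nat.add_0_r; auto.
  - rewrite Nat.add_succ_r. rewrite FF_A by (apply (H (S (a + d))); lia).
    simpl. f_equal. apply functional_extensionality. intros y; apply IHd. intros; apply H; lia.
Qed.

Lemma colMs x' : (x' <= r)%nat -> rsum (S r) (fun x => Ms q x x') = 1.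
Proof.
  intros Hx. unfold Ms. destruct (Nat.eqb_spec x' 0).
  - apply hqsum; lia.
  - rewrite (rsum_ext _ _ (fun x => delta x x' * 1)) by (intros; ring). apply rsum_delta; lia.
Qed.
Lemma colMl z : (z <= r)%nat -> rsum (S r) (fun x' => Ml q r x' z) = 1.
Proof.
  intros Hz. unfold Ml. destruct (Nat.eqb_spec z 0).
  - rewrite (rsum_ext _ _ (fun x => delta x 0 * 1)) by (intros; ring). apply rsum_delta; lia.
  - destruct (Nat.eqb_spec z r).
    + rewrite (rsum_ext _ _ (fun x => delta x r * 1)) by (intros; ring). apply rsum_delta; lia.
    + apply hqsum; lia.
Qed.

Lemma sum_Mv u : rsum (S r) (Mv u) = rsum (S r) u.
Proof.
  unfold Mv, Mlv.
  rewrite (rsum_ext _ _ (fun x => rsum (S r) (fun x' => rsum (S r) (fun z => Ms q x x' * Ml q r x' z * u z)))).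
  2:{ intros; apply rsum_ext; intros. rewrite <- rsum_scal. apply rsum_ext; intros; ring. }
  rewrite rsum_swap.
  rewrite (rsum_ext _ _ (fun x' => rsum (S r) (fun z => rsum (S r) (fun x => Ms q x x' * Ml q r x' z * u z)))).
  2:{ intros; apply rsum_swap. }
  rewrite rsum_swap. apply rsum_ext. intros z Hz.
  rewrite (rsum_ext _ _ (fun x' => (Ml q r x' z * u z) * rsum (S r) (fun x => Ms q x x'))).
  2:{ intros x' Hx'. rewrite <- rsum_scal. apply rsum_ext; intros; ring. }
  rewrite (rsum_ext _ _ (fun x' => Ml q r x' z * u z)).
  2:{ intros x' Hx'. rewrite colMs; [ring|lia]. }
  rewrite rsum_scal_r, colMl; [ring|lia].
Qed.

Lemma sum_Mp n u : rsum (S r) (Mp n u) = rsum (S r) u.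
Proof. induction n; cbn [Mp]; auto. rewrite sum_Mv; auto. Qed.

Lemma Mv_0 u : Mv u O = q O O * Mlv r q u O.
Proof. unfold Mv. rewrite (rsum_single (S r) O); [|lia|].
  - unfold Ms; simpl; auto.
  - intros i _ Hi. unfold Ms, delta. apply Nat.eqb_neq in Hi. rewrite Hi. simpl.
    destruct i; [discriminate|]. simpl; ring. Qed.

Lemma Mv_lin a b u v x : Mv (fun y => a * u y + b * v y) x = a * Mv u x + b * Mv v x.
Proof. unfold Mv, Mlv. rewrite <- (rsum_scal (S r) a), <- (rsum_scal (S r) b), <- rsum_plus. apply rsum_ext; intros.
  rewrite <- (rsum_scal (S r) (Ms q x i)), <- (rsum_scal (S r) (Ms q x i)), <- (rsum_scal (S r) (Ms q x i)).
  rewrite <- (rsum_scal (S r) a), <- (rsum_scal (S r) b), <- rsum_plus. apply rsum_ext; intros; ring. Qed.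
Lemma Mp_lin n a b u v x : Mp n (fun y => a * u y + b * v y) x = a * Mp n u x + b * Mp n v x.
Proof. revert x; induction n; intros x; simpl; auto.
  rewrite (functional_extensionality _ _ IHn). apply Mv_lin. Qed.
Lemma Mp_comm n u : Mp n (Mv u) = Mv (Mp n u).
Proof. induction n; simpl; auto. rewrite IHn; auto. Qed.

Definition e0 (x : nat) : R := delta x O.
Lemma Mv_e0 x : Mv e0 x = q x O.
Proof. unfold Mv. rewrite (rsum_single (S r) O); [|lia|].
  - unfold Mlv, e0. rewrite (rsum_ext _ _ (fun z => delta z 0 * Ml q r 0 z)) by (intros; ring).
    rewrite rsum_delta by lia. unfold Ml, Ms, delta; simpl. ring.
  - intros i _ Hi. unfold Mlv, e0. rewrite (rsum_ext _ _ (fun z => delta z 0 * Ml q r i z)) by (intros; ring).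
    rewrite rsum_delta by lia. unfold Ml, delta; simpl. apply Nat.eqb_neq in Hi; rewrite Hi; ring. Qed.

Lemma sum_q0 c0 c1 : rsum (S r) (fun x => q x O * (if Nat.eqb x 0 then c0 else c1)) = q O O * c0 + (1 - q O O) * c1.
Proof. rewrite rsum_first. simpl. rewrite rsum_scal_r.
  pose proof (hqsum O ltac:(lia)) as H. rewrite rsum_first in H. replace (rsum r (fun i => q (S i) 0%nat)) with (1 - q O O) by lra. ring. Qed.

Definition th1 := q O O * e00 + (1 - q O O) * e10.
Definition S2 := q O O * f00 + (1 - q O O) * f10.

Lemma FF_before t0 t1 n : (forall j, (0 < j <= n)%nat -> j <> t0 /\ j <> t1) -> forall x, FF t0 t1 n x = Mp n nu x.
Proof. intros H x. apply (FF_prop t0 t1 O n); auto. Qed.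

Lemma sumFF_after t0 t1 t T : (t <= T)%nat -> (forall j, (t < j <= T)%nat -> j <> t0 /\ j <> t1) ->
  rsum (S r) (FF t0 t1 T) = rsum (S r) (FF t0 t1 t).
Proof. intros Ht H. replace T with (t + (T - t))%nat by lia.
  rewrite (rsum_ext _ _ (Mp (T - t) (FF t0 t1 t))) by (intros; apply FF_prop; intros; apply H; lia).
  apply sum_Mp. Qed.

Lemma val_one T : rsum (S r) (FF O O T) = 1.
Proof. rewrite (rsum_ext _ _ (Mp T nu)) by (intros; apply FF_before; lia). rewrite sum_Mp; auto. Qed.

Lemma Mlv_Mp n : Mlv r q (Mp n nu) O = Mp (S n) nu O / q O O.
Proof. cbn [Mp]. rewrite Mv_0. field. lra. Qed.

Lemma val_single (a b : R) t0 t1 t T : (1 <= t <= T)%nat ->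
  (forall j, (0 < j < t)%nat -> j <> t0 /\ j <> t1) ->
  (forall j, (t < j <= T)%nat -> j <> t0 /\ j <> t1) ->
  (t = t0 \/ t = t1) -> (cc e00 f00 t0 t1 t = a) -> (cc e10 f10 t0 t1 t = b) ->
  rsum (S r) (FF t0 t1 T) = (q O O * a + (1 - q O O) * b) * (Mp t nu O / q O O).
Proof.
  intros Ht Hb Ha Hs Ea Eb. rewrite (sumFF_after t0 t1 t T) by (auto; lia).
  destruct t as [|n]; [lia|].
  rewrite (rsum_ext _ _ (fun x => q x O * (if Nat.eqb x 0 then a else b) * Mlv r q (FF t0 t1 n) O)).
  2:{ intros x _. rewrite FF_B by auto. rewrite Ea, Eb. auto. }
  rewrite rsum_scal_r, sum_q0. f_equal.
  rewrite (functional_extensionality _ _ (FF_before t0 t1 n ltac:(intros; apply Hb; lia))).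
  apply Mlv_Mp.
Qed.

Lemma val_double t t' T : (1 <= t')%nat -> (t' < t)%nat -> (t <= T)%nat ->
  rsum (S r) (FF t t' T) = th1 * (Mp t' nu O / q O O) *
    ((e00 - e10) * q O O * Mp (t - t') e0 O + e10 * Mp (S (t - t')) e0 O) / q O O.
Proof.
  intros H1 H2 H3. rewrite (sumFF_after t t' t T) by (auto; intros; lia).
  destruct t as [|n]; [lia|].
  rewrite (rsum_ext _ _ (fun x => q x O * (if Nat.eqb x 0 then e00 else e10) * Mlv r q (FF (S n) t' n) O)).
  2:{ intros x _. rewrite FF_B by auto. unfold cc. rewrite Nat.eqb_refl.
      replace (Nat.eqb (S n) t') with false by (symmetry; apply Nat.eqb_neq; lia). auto. }
  rewrite rsum_scal_r, sum_q0. fold th1.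
  replace n with (t' + (n - t'))%nat by lia.
  rewrite (functional_extensionality _ _ (FF_prop (S (t' + (n - t'))) t' t' (n - t') ltac:(intros; lia))).
  destruct t' as [|n']; [lia|].
  set (pi' := Mp (S n') nu O / q O O).
  assert (E : FF (S (S n' + (n - S n'))) (S n') (S n') = fun x => pi' * (e00 - e10) * q O O * e0 x + pi' * e10 * Mv e0 x).
  { apply functional_extensionality; intros x. rewrite FF_B by auto. unfold cc.
    rewrite Nat.eqb_refl. replace (Nat.eqb (S n') (S (S n' + (n - S n')))) with false by (symmetry; apply Nat.eqb_neq; lia).
    rewrite Mv_e0. unfold pi'. rewrite (functional_extensionality _ _ (FF_before (S (S n' + (n - S n'))) (S n') n' ltac:(intros; lia))).
    rewrite Mlv_Mp. unfold e0, delta. destruct (Nat.eqb_spec x 0); [subst; ring| ring]. }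
  rewrite E. unfold Mlv at 1.
  replace (S (S n' + (n - S n')) - S n')%nat with (S (n - S n')) by lia.
  assert (Mlv r q (Mp (n - S n') (fun x : nat => pi' * (e00 - e10) * q O O * e0 x + pi' * e10 * Mv e0 x)) O
          = (pi' * (e00 - e10) * q O O * Mp (S (n - S n')) e0 O + pi' * e10 * Mp (S (S (n - S n'))) e0 O) / q O O) as E2.
  { assert (EE : forall u, Mlv r q u O = Mv u O / q O O) by (intros; rewrite Mv_0; field; lra).
    rewrite EE. change (Mv (Mp (n - S n') ?F) O) with (Mp (S (n - S n')) F O). rewrite Mp_lin.
    rewrite Mp_comm. reflexivity. }
  fold (Mlv r q (Mp (n - S n') (fun x : nat => pi' * (e00 - e10) * q O O * e0 x + pi' * e10 * Mv e0 x)) O).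
  rewrite E2. field. lra.
Qed.
End Calc.

Lemma csum_mul n m f g : Cmul (csum n f) (csum m g) = csum n (fun i => csum m (fun j => Cmul (f i) (g j))).
Proof. induction n; simpl. apply Cx_ext; simpl; ring.
  rewrite <- IHn. rewrite csum_scal. ring. Qed.
Lemma Cpow_S z n : Cpow z (S n) = Cmul (Cpow z n) z.
Proof. reflexivity. Qed.

Section Spec.
Variable r : nat.
Variable q : nat -> nat -> R.
Variables V W : nat -> nat -> Cx.
Variable lam : nat -> Cx.
Hypothesis hVW : forall i j, (i <= r)%nat -> (j <= r)%nat ->
           csum (S r) (fun k => Cmul (V i k) (W k j)) = RtoC (delta i j).
Hypothesis hWV : forall i j, (i <= r)%nat -> (j <= r)%nat ->
           csum (S r) (fun k => Cmul (W i k) (V k j)) = RtoC (delta i j).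
Hypothesis hM : forall i j, (i <= r)%nat -> (j <= r)%nat ->
           RtoC (Mfull q r i j) = csum (S r) (fun k => Cmul (Cmul (V i k) (lam k)) (W k j)).

Lemma Mv_full u x : Mv r q u x = rsum (S r) (fun z => Mfull q r x z * u z).
Proof.
  unfold Mv, Mlv, Mfull.
  rewrite (rsum_ext _ _ (fun x' => rsum (S r) (fun z => Ms q x x' * Ml q r x' z * u z))).
  2:{ intros; rewrite <- rsum_scal; apply rsum_ext; intros; ring. }
  rewrite rsum_swap. apply rsum_ext; intros. rewrite rsum_scal_r. auto.
Qed.

Definition Wv (u : nat -> R) (k : nat) : Cx := csum (S r) (fun j => Cmul (W k j) (RtoC (u j))).

Lemma spectral n u x : (x <= r)%nat ->
  RtoC (Mp r q n u x) = csum (S r) (fun k => Cmul (Cmul (V x k) (Cpow (lam k) n)) (Wv u k)).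
Proof.
  revert x; induction n as [|n IH]; intros x Hx.
  - cbn [Mp]. unfold Wv.
    rewrite (csum_ext _ _ (fun k => csum (S r) (fun j => Cmul (Cmul (V x k) (W k j)) (RtoC (u j))))).
    2:{ intros k _. simpl Cpow. rewrite <- csum_scal. apply csum_ext; intros; ring. }
    rewrite csum_swap.
    rewrite (csum_ext _ _ (fun j => Cmul (RtoC (delta j x)) (RtoC (u j)))).
    2:{ intros j Hj. rewrite (csum_ext _ _ (fun k => Cmul (RtoC (u j)) (Cmul (V x k) (W k j)))) by (intros; ring).
        rewrite csum_scal, hVW by lia. unfold delta. rewrite Nat.eqb_sym. ring. }
    rewrite csum_delta by lia. auto.
  - cbn [Mp]. rewrite Mv_full, RtoC_rsum.
    rewrite (csum_ext _ _ (fun z => csum (S r) (fun k => csum (S r) (fun l =>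
        Cmul (Cmul (Cmul (Cmul (V x k) (lam k)) (Cmul (Cpow (lam l) n) (Wv u l))) (V z l)) (W k z))))).
    2:{ intros z Hz. rewrite RtoC_mult, hM, IH by lia. rewrite csum_mul. apply csum_ext; intros k _.
        apply csum_ext; intros l _. ring. }
    rewrite csum_swap.
    apply csum_ext; intros k Hk.
    rewrite csum_swap.
    rewrite (csum_ext _ _ (fun l => Cmul (RtoC (delta k l)) (Cmul (Cmul (V x k) (lam k)) (Cmul (Cpow (lam l) n) (Wv u l))))).
    2:{ intros l Hl. rewrite (csum_ext _ _ (fun z => Cmul (Cmul (Cmul (V x k) (lam k)) (Cmul (Cpow (lam l) n) (Wv u l))) (Cmul (W k z) (V z l)))) by (intros; ring).
        rewrite csum_scal, hWV by lia. ring. }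
    rewrite (csum_ext _ _ (fun l => Cmul (RtoC (delta l k)) (Cmul (Cmul (V x k) (lam k)) (Cmul (Cpow (lam l) n) (Wv u l))))).
    2:{ intros l _. unfold delta. rewrite Nat.eqb_sym. auto. }
    rewrite csum_delta by lia. rewrite Cpow_S. ring.
Qed.
End Spec.

Section Mu.
Variable r : nat.
Variable q : nat -> nat -> R.
Variables V W : nat -> nat -> Cx.
Variable lam : nat -> Cx.
Variable nu : nat -> R.
Hypothesis hr : (1 <= r)%nat.
Hypothesis hVW : forall i j, (i <= r)%nat -> (j <= r)%nat ->
           csum (S r) (fun k => Cmul (V i k) (W k j)) = RtoC (delta i j).
Hypothesis hWV : forall i j, (i <= r)%nat -> (j <= r)%nat ->
           csum (S r) (fun k => Cmul (W i k) (V k j)) = RtoC (delta i j).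
Hypothesis hM : forall i j, (i <= r)%nat -> (j <= r)%nat ->
           RtoC (Mfull q r i j) = csum (S r) (fun k => Cmul (Cmul (V i k) (lam k)) (W k j)).

Lemma mu_eq m th t : (1 <= t)%nat ->
  mu r m th (q O O) nu V W lam t = RtoC (INR m * th * (Mp r q t nu O / q O O)).
Proof.
  intros Ht. destruct t as [|n]; [lia|]. unfold mu, alpha.
  rewrite (csum_ext _ _ (fun x => Cmul (RtoC (/ q O O)) (Cmul (Cmul (V O x) (Cpow (lam x) (S n))) (Wv r W nu x)))).
  2:{ intros x _. replace (S n - 1)%nat with n by lia. rewrite Cpow_S. unfold Wv. ring. }
  rewrite csum_scal, <- (spectral r q V W lam) by (auto; lia). apply Cx_ext; simpl; unfold Rdiv; ring.
Qed.

Lemma mu0_eq m th t : (1 <= t)%nat ->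
  mu0 r m th (q O O) V W lam t = RtoC (INR m * th * (Mp r q t e0 O / q O O)).
Proof.
  intros Ht. destruct t as [|n]; [lia|]. unfold mu0, alpha0.
  rewrite (csum_ext _ _ (fun x => Cmul (RtoC (/ q O O)) (Cmul (Cmul (V O x) (Cpow (lam x) (S n))) (Wv r W e0 x)))).
  2:{ intros x _. replace (S n - 1)%nat with n by lia. rewrite Cpow_S. unfold Wv.
      rewrite (csum_ext _ _ (fun j => Cmul (RtoC (delta j O)) (W x j))).
      2:{ intros; unfold e0; ring. }
      rewrite csum_delta by lia. ring. }
  rewrite csum_scal, <- (spectral r q V W lam) by (auto; lia). apply Cx_ext; simpl; unfold Rdiv; ring.
Qed.

Lemma alpha_split x : nu O < 1 ->
  alpha r (q O O) nu V W lam x =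
  Cadd (Cmul (RtoC (nu O)) (alpha0 (q O O) V W lam x)) (Cmul (RtoC (1 - nu O)) (alpha1 r (q O O) nu V W lam x)).
Proof.
  intros Hn. unfold alpha, alpha0, alpha1.
  rewrite (csum_ext _ _ (fun z => Cadd (Cmul (RtoC (nu O)) (Cmul (RtoC (delta z O)) (W x z)))
                                        (Cmul (RtoC (1 - nu O)) (Cmul (W x z) (RtoC (nu' nu z)))))).
  2:{ intros z _. unfold nu', delta. destruct (Nat.eqb_spec z 0).
      - subst. apply Cx_ext; simpl; ring.
      - apply Cx_ext; simpl; field; lra. }
  rewrite csum_plus, csum_scal, csum_scal, csum_delta by lia. ring.
Qed.
End Mu.

Lemma rprod_special T t0 (a : nat -> R) :
  rprod T (fun i => if Nat.eqb (S i) t0 then a (S i) else 1) =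
  if andb (Nat.leb 1 t0) (Nat.leb t0 T) then a t0 else 1.
Proof.
  induction T.
  - cbn [rprod]. destruct (Nat.leb_spec 1 t0); destruct (Nat.leb_spec t0 0); try lia; reflexivity.
  - change (rprod (S T) ?f) with (rprod T f * f T). rewrite IHT. cbv beta.
    destruct (Nat.eqb_spec (S T) t0); destruct (Nat.leb_spec 1 t0); destruct (Nat.leb_spec t0 T);
      destruct (Nat.leb_spec t0 (S T)); simpl; try lia; subst; ring.
Qed.

Lemma G_kk t0 t1 T s : G (kk t0 t1) T s =
  (if andb (Nat.leb 1 t0) (Nat.leb t0 T) then INR (sy s t0) else 1) *
  (if andb (Nat.leb 1 t1) (Nat.leb t1 T) then INR (sy s t1) else 1).
Proof.
  unfold G, kk. rewrite rprod_mult.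
  rewrite (rprod_special T t0 (fun j => INR (sy s j))), (rprod_special T t1 (fun j => INR (sy s j))). auto.
Qed.

Section Single.
Variables r T : nat.
Variable q : nat -> nat -> R.
Variable nu : nat -> R.
Variables p00 p10 : nat -> R.
Variables e00 e10 f00 f10 : R.
Hypothesis hr : (1 <= r)%nat.
Hypothesis hq01 : forall x z, (x <= r)%nat -> (z <= r - 1)%nat -> 0 <= q x z <= 1.
Hypothesis hqsum : forall z, (z <= r - 1)%nat -> rsum (S r) (fun x => q x z) = 1.
Hypothesis hnu0 : forall x, (x <= r)%nat -> 0 <= nu x.
Hypothesis hnu1 : rsum (S r) nu = 1.
Hypothesis hp00 : forall n, 0 <= p00 n.
Hypothesis hp10 : forall n, 0 <= p10 n.
Hypothesis hp00s : has_sum p00 1.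
Hypothesis hp10s : has_sum p10 1.
Hypothesis he00 : has_sum (fun n => p00 n * INR n) e00.
Hypothesis he10 : has_sum (fun n => p10 n * INR n) e10.
Hypothesis hf00 : has_sum (fun n => p00 n * INR n ^ 2) f00.
Hypothesis hf10 : has_sum (fun n => p10 n * INR n ^ 2) f10.
Hypothesis hq00 : 0 < q O O < 1.

Lemma base_sum t0 t1 : has_sum (fun a : Omega1 r T => P1 q nu p00 p10 r T (proj1_sig a) * G (kk t0 t1) T (proj1_sig a) * 1)
   (rsum (S r) (FF r q nu e00 e10 f00 f10 t0 t1 T)).
Proof.
  eapply has_sum_eq; [| apply (F_lemma r q nu p00 p10 hr hq01 hnu0 hp00 hp10 (kk t0 t1) (cc e00 f00 t0 t1) (cc e10 f10 t0 t1)
     (kk_nonneg t0 t1) (kk_sum p00 e00 f00 hp00s he00 hf00 t0 t1) (kk_sum p10 e10 f10 hp10s he10 hf10 t0 t1) T (fun _ => 1))].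
  - apply rsum_ext; intros. unfold FF. ring.
  - intros; lra.
Qed.

Lemma s_one : has_sum (PP1 r T q nu p00 p10) 1.
Proof.
  rewrite <- (val_one r q nu e00 e10 f00 f10 hr hqsum hnu1 T).
  eapply has_sum_ext; [| apply (base_sum O O)]. intros a. cbv beta. rewrite G_kk. simpl. unfold PP1; ring.
Qed.

Lemma s_y t : (1 <= t <= T)%nat ->
  has_sum (fun a => PP1 r T q nu p00 p10 a * INR (sy (proj1_sig a) t)) (th1 q e00 e10 * (Mp r q t nu O / q O O)).
Proof.
  intros Ht. unfold th1. rewrite <- (val_single r q nu e00 e10 f00 f10 hr hqsum hq00 e00 e10 t O t T); auto.
  - eapply has_sum_ext; [| apply (base_sum t O)]. intros a. cbv beta. rewrite G_kk.
    replace (andb (Nat.leb 1 t) (Nat.leb t T)) with true by (symmetry; apply Bool.andb_true_iff; split; apply Nat.leb_le; lia).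
    simpl. unfold PP1; ring.
  - intros; lia.
  - intros; lia.
  - unfold cc. rewrite Nat.eqb_refl. replace (Nat.eqb t 0) with false by (symmetry; apply Nat.eqb_neq; lia). auto.
  - unfold cc. rewrite Nat.eqb_refl. replace (Nat.eqb t 0) with false by (symmetry; apply Nat.eqb_neq; lia). auto.
Qed.

Lemma s_y2 t : (1 <= t <= T)%nat ->
  has_sum (fun a => PP1 r T q nu p00 p10 a * (INR (sy (proj1_sig a) t) * INR (sy (proj1_sig a) t))) (S2 q f00 f10 * (Mp r q t nu O / q O O)).
Proof.
  intros Ht. unfold S2. rewrite <- (val_single r q nu e00 e10 f00 f10 hr hqsum hq00 f00 f10 t t t T); auto.
  - eapply has_sum_ext; [| apply (base_sum t t)]. intros a. cbv beta. rewrite G_kk.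
    replace (andb (Nat.leb 1 t) (Nat.leb t T)) with true by (symmetry; apply Bool.andb_true_iff; split; apply Nat.leb_le; lia).
    unfold PP1; ring.
  - intros; lia.
  - intros; lia.
  - unfold cc. rewrite Nat.eqb_refl. auto.
  - unfold cc. rewrite Nat.eqb_refl. auto.
Qed.

Lemma s_yy t t' : (1 <= t')%nat -> (t' < t)%nat -> (t <= T)%nat ->
  has_sum (fun a => PP1 r T q nu p00 p10 a * (INR (sy (proj1_sig a) t) * INR (sy (proj1_sig a) t')))
    (th1 q e00 e10 * (Mp r q t' nu O / q O O) *
    ((e00 - e10) * q O O * Mp r q (t - t') e0 O + e10 * Mp r q (S (t - t')) e0 O) / q O O).
Proof.
  intros H1 H2 H3. rewrite <- (val_double r q nu e00 e10 f00 f10 hr hqsum hq00 t t' T); auto.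
  eapply has_sum_ext; [| apply (base_sum t t')]. intros a. cbv beta. rewrite G_kk.
  replace (andb (Nat.leb 1 t) (Nat.leb t T)) with true by (symmetry; apply Bool.andb_true_iff; split; apply Nat.leb_le; lia).
  replace (andb (Nat.leb 1 t') (Nat.leb t' T)) with true by (symmetry; apply Bool.andb_true_iff; split; apply Nat.leb_le; lia).
  unfold PP1; ring.
Qed.
End Single.

Theorem mainTheorem6
  (r T m : nat) (q : nat -> nat -> R) (nu : nat -> R) (p00 p10 : nat -> R)
  (e00 e10 f00 f10 : R) (V W : nat -> nat -> Cx) (lam : nat -> Cx)
  (hr : (1 <= r)%nat) (hT : (1 <= T)%nat) (hm : (1 <= m)%nat)
  (hq01 : forall x z, (x <= r)%nat -> (z <= r - 1)%nat -> 0 <= q x z <= 1)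
  (hqsum : forall z, (z <= r - 1)%nat -> rsum (S r) (fun x => q x z) = 1)
  (hnu0 : forall x, (x <= r)%nat -> 0 <= nu x)
  (hnu1 : rsum (S r) nu = 1)
  (hp00 : forall n, 0 <= p00 n) (hp00s : has_sum p00 1)
  (hp10 : forall n, 0 <= p10 n) (hp10s : has_sum p10 1)
  (he00 : has_sum (fun n => p00 n * INR n) e00)
  (he10 : has_sum (fun n => p10 n * INR n) e10)
  (hf00 : has_sum (fun n => p00 n * INR n ^ 2) f00)
  (hf10 : has_sum (fun n => p10 n * INR n ^ 2) f10)
  (hmgf00 : exists eps, 0 < eps /\ forall s, Rabs s < eps ->
              exists L, has_sum (fun n => p00 n * exp (s * INR n)) L)
  (hmgf10 : exists eps, 0 < eps /\ forall s, Rabs s < eps ->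
              exists L, has_sum (fun n => p10 n * exp (s * INR n)) L)
  (hq00 : 0 < q 0%nat 0%nat < 1)
  (hth1 : 0 < theta1 (q 0%nat 0%nat) e00 e10)
  (hVW : forall i j, (i <= r)%nat -> (j <= r)%nat ->
           csum (S r) (fun k => Cmul (V i k) (W k j)) = RtoC (delta i j))
  (hWV : forall i j, (i <= r)%nat -> (j <= r)%nat ->
           csum (S r) (fun k => Cmul (W i k) (V k j)) = RtoC (delta i j))
  (hM : forall i j, (i <= r)%nat -> (j <= r)%nat ->
           RtoC (Mfull q r i j) = csum (S r) (fun k => Cmul (Cmul (V i k) (lam k)) (W k j)))
  (hlamr : lam r = RtoC 1)
  (hVr : forall i, (i <= r)%nat -> V i r = RtoC (delta i r)) :
  let q00 := q 0%nat 0%nat in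
  let th1 := theta1 q00 e00 e10 in
  let th2 := theta2 q00 e00 e10 in
  let th3 := theta3 q00 e00 e10 f00 f10 in
  let P := Pm q nu p00 p10 r T m in
  let mu_ := mu r m th1 q00 nu V W lam in
  let mu0_ := mu0 r m th1 q00 V W lam in
  (* expectation *)
  (forall t, (1 <= t <= T)%nat ->
     has_sum (fun w : Omega r T m => P w * Ym t w) (Cre (mu_ t)) /\ Cim (mu_ t) = 0)
  /\
  (* alternative expression of mu_t when nu_0 < 1 *)
  (nu 0%nat < 1 -> forall t, (1 <= t)%nat ->
     mu_ t = Cmul (RtoC (INR m * th1))
               (csum r (fun x => Cmul (Cadd (Cmul (RtoC (nu 0%nat)) (alpha0 q00 V W lam x))
                                            (Cmul (RtoC (1 - nu 0%nat)) (alpha1 r q00 nu V W lam x)))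
                                      (Cpow (lam x) (t - 1)))))
  /\
  (* variance *)
  (forall t, (1 <= t <= T)%nat ->
     let S := Cmul (RtoC (/ INR m))
                (Cmul (Csub (RtoC (INR m * th1 * (th3 + 1) + INR m)) (mu_ t)) (mu_ t)) in
     has_sum (fun w : Omega r T m =>
                P w * ((Ym t w - Cre (mu_ t)) * (Ym t w - Cre (mu_ t)))) (Cre S)
     /\ Cim S = 0)
  /\
  (* covariance *)
  (forall t t', (1 <= t')%nat -> (t' < t)%nat -> (t <= T)%nat ->
     let S := Cmul (RtoC (/ INR m))
                (Cmul (Csub (Cadd (Cmul (RtoC (th2 - q00 * (1 - th2) / (1 - q00))) (mu0_ (t - t')%nat))
                                  (Cmul (RtoC ((1 - th2) / (1 - q00))) (mu0_ (t - t' + 1)%nat)))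
                            (mu_ t))
                      (mu_ t')) in
     has_sum (fun w : Omega r T m =>
                P w * ((Ym t w - Cre (mu_ t)) * (Ym t' w - Cre (mu_ t')))) (Cre S)
     /\ Cim S = 0).
Proof.
  cbv zeta.
  assert (Hm : 0 < INR m) by (apply lt_0_INR; lia).
  assert (Hth : theta1 (q 0%nat 0%nat) e00 e10 = th1 q e00 e10) by reflexivity.
  assert (Hth0 : th1 q e00 e10 <> 0) by (rewrite <- Hth; lra).
  assert (One : has_sum (PP1 r T q nu p00 p10) 1) by (eapply (s_one r T q nu p00 p10 e00 e10 f00 f10); eauto).
  assert (Ey : forall t, (1 <= t <= T)%nat -> has_sum (fun a => PP1 r T q nu p00 p10 a * INR (sy (proj1_sig a) t)) (th1 q e00 e10 * (Mp r q t nu O / q O O)))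
    by (intros; eapply (s_y r T q nu p00 p10 e00 e10 f00 f10); eauto).
  assert (Ey2 : forall t, (1 <= t <= T)%nat -> has_sum (fun a => PP1 r T q nu p00 p10 a * (INR (sy (proj1_sig a) t) * INR (sy (proj1_sig a) t))) (S2 q f00 f10 * (Mp r q t nu O / q O O)))
    by (intros; eapply (s_y2 r T q nu p00 p10 e00 e10 f00 f10); eauto).
  assert (MU : forall t, (1 <= t)%nat -> mu r m (theta1 (q 0%nat 0%nat) e00 e10) (q 0%nat 0%nat) nu V W lam t =
             RtoC (INR m * th1 q e00 e10 * (Mp r q t nu O / q O O)))
    by (intros; rewrite Hth; apply (mu_eq r q V W lam nu hr hVW hWV hM); auto).
  assert (MU0 : forall t, (1 <= t)%nat -> mu0 r m (theta1 (q 0%nat 0%nat) e00 e10) (q 0%nat 0%nat) V W lam t =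
             RtoC (INR m * th1 q e00 e10 * (Mp r q t e0 O / q O O)))
    by (intros; rewrite Hth; apply (mu0_eq r q V W lam hr hVW hWV hM); auto).
  split; [|split; [|split]].
  -
    intros t Ht. rewrite MU by lia. split; [|reflexivity].
    destruct (M_lemma r T q nu p00 p10 hr hq01 hnu0 hp00 hp10 t t _ _ _ One (Ey t Ht) (Ey t Ht) (Ey2 t Ht) m) as [J1 [J2 [J3 J4]]].
    eapply has_sum_eq; [|exact J2]. simpl. ring.
  -
    intros Hn t Ht. unfold mu. f_equal. change (csum (S r) ?f) with (Cadd (csum r f) (f r)).
    unfold alpha at 2. rewrite hVr by lia. unfold delta at 1.
    replace (Nat.eqb 0 r) with false by (symmetry; apply Nat.eqb_neq; lia).
    rewrite (csum_ext r _ (fun x => Cmul (Cadd (Cmul (RtoC (nu 0%nat)) (alpha0 (q 0%nat 0%nat) V W lam x))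
                                            (Cmul (RtoC (1 - nu 0%nat)) (alpha1 r (q 0%nat 0%nat) nu V W lam x)))
                                      (Cpow (lam x) (t - 1)))).
    + ring.
    + intros x _. rewrite (alpha_split r q V W lam nu hr); auto.
  -
    intros t Ht. rewrite !MU by lia. split; [|simpl; ring].
    destruct (M_lemma r T q nu p00 p10 hr hq01 hnu0 hp00 hp10 t t _ _ _ One (Ey t Ht) (Ey t Ht) (Ey2 t Ht) m) as [J1 [J2 [J3 J4]]].
    set (c := INR m * th1 q e00 e10 * (Mp r q t nu O / q O O)).
    pose proof (has_sum_plus _ _ _ _ (has_sum_minus _ _ _ _ (has_sum_minus _ _ _ _ J4 (has_sum_scal _ c _ J2)) (has_sum_scal _ c _ J2)) (has_sum_scal _ (c * c) _ J1)) as JJ.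
    eapply has_sum_eq; [|eapply has_sum_ext; [|exact JJ]].
    + simpl. unfold c, theta3, S2. rewrite Hth. unfold th1 in *. field. split; lra.
    + intros a. cbv beta. unfold PP. cbn [Cre RtoC]. ring.
  -
    intros t t' H1 H2 H3.
    assert (Ht : (1 <= t <= T)%nat) by lia. assert (Ht' : (1 <= t' <= T)%nat) by lia.
    rewrite !MU, !MU0 by lia. split; [|simpl; ring].
    assert (Eyy : has_sum (fun a => PP1 r T q nu p00 p10 a * (INR (sy (proj1_sig a) t) * INR (sy (proj1_sig a) t')))
    (th1 q e00 e10 * (Mp r q t' nu O / q O O) * ((e00 - e10) * q O O * Mp r q (t - t') e0 O + e10 * Mp r q (S (t - t')) e0 O) / q O O))
      by (eapply (s_yy r T q nu p00 p10 e00 e10 f00 f10); eauto).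
    destruct (M_lemma r T q nu p00 p10 hr hq01 hnu0 hp00 hp10 t t' _ _ _ One (Ey t Ht) (Ey t' Ht') Eyy m) as [J1 [J2 [J3 J4]]].
    set (c := INR m * th1 q e00 e10 * (Mp r q t nu O / q O O)).
    set (c' := INR m * th1 q e00 e10 * (Mp r q t' nu O / q O O)).
    pose proof (has_sum_plus _ _ _ _ (has_sum_minus _ _ _ _ (has_sum_minus _ _ _ _ J4 (has_sum_scal _ c _ J3)) (has_sum_scal _ c' _ J2)) (has_sum_scal _ (c * c') _ J1)) as JJ.
    eapply has_sum_eq; [|eapply has_sum_ext; [|exact JJ]].
    + cbn [Cre Cim Cmul Cadd Csub Copp RtoC]. unfold c, c', theta2. rewrite Nat.add_1_r, Hth. unfold th1 in *. field. repeat split; lra.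
    + intros a. cbv beta. unfold PP. cbn [Cre RtoC]. ring.
Qed.
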